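(* Let $(q_n),(r_n)$ be complex sequences vanishing faster than any negative power of $|n|$ as $n\to\pm\infty$ with $1-q_nr_n\neq0$ and $1+q_nr_{n+1}\ne0$ for all $n$, and let $\begin{bmatrix}\bar M_{nm}&M_{nm}\end{bmatrix}$ be as in the context. Writing $[\mathbf v]_1,[\mathbf v]_2$ for the components of a column vector $\mathbf v$, $$q_n=\frac{\sum_{l=n}^\infty[M_{nl}]_1\sum_{k=n}^\infty[M_{nk}]_2}{\sum_{l=n}^\infty[\bar M_{nl}]_1\sum_{k=n}^\infty[M_{nk}]_2-\sum_{l=n}^\infty[M_{nl}]_1\sum_{k=n}^\infty[\bar M_{nk}]_2},$$ $$r_n=\frac{\sum_{l=n-1}^\infty[\bar M_{(n-1)l}]_2}{\sum_{l=n-1}^\infty[M_{(n-1)l}]_2}-\frac{\sum_{l=n}^\infty[\bar M_{nl}]_2}{\sum_{l=n}^\infty[M_{nl}]_2}.$$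
   Context: System (Q): $\begin{bmatrix}\alpha_n\\ \beta_n\end{bmatrix}=\begin{bmatrix} z & (z-z^{-1})q_n\\ z r_n & z^{-1}+(z-z^{-1})q_nr_n\end{bmatrix}\begin{bmatrix}\alpha_{n+1}\\ \beta_{n+1}\end{bmatrix}$, $n\in\mathbb Z$. For $|z|=1$ let $\psi_n$, $\bar\psi_n$ (overbar not complex conjugation) be the solutions with $\psi_n=\begin{bmatrix}o(1)\\ z^n[1+o(1)]\end{bmatrix}$ and $\bar\psi_n=\begin{bmatrix}z^{-n}[1+o(1)]\\ o(1)\end{bmatrix}$ as $n\to+\infty$. Let $K_{nm}:=\frac1{2\pi i}\oint\psi_n z^{-m-1}dz$, $\bar K_{nm}:=\frac1{2\pi i}\oint\bar\psi_n z^{m-1}dz$ (integrals counterclockwise over the unit circle; these are column vectors with $\psi_n=\sum_{l\ge n}K_{nl}z^l$, $\bar\psi_n=\sum_{l\ge n}\bar K_{nl}z^{-l}$). The $2\times2$ matrix $\begin{bmatrix}\bar K_{nn}&K_{nn}\end{bmatrix}$ is invertible and $\begin{bmatrix}\bar M_{nm}&M_{nm}\end{bmatrix}:=\begin{bmatrix}\bar K_{nn}&K_{nn}\end{bmatrix}^{-1}\begin{bmatrix}\bar K_{nm}&K_{nm}\end{bmatrix}$ for $m\ge n$. (These $M,\bar M$ are the solution of the discrete Marchenko system of (Q).) *)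

(* Defs.v *)
From Stdlib Require Import Reals ZArith.
From Coquelicot Require Import Coquelicot.
Open Scope C_scope.

Definition vec2 := (C * C)%type.
Definition comp1 (v : vec2) : C := fst v.
Definition comp2 (v : vec2) : C := snd v.

Fixpoint cpow (z : C) (k : nat) : C :=
  match k with O => 1 | S k' => z * cpow z k' end.
Definition zpow (z : C) (m : Z) : C :=
  match m with
  | Z0 => 1
  | Zpos p => cpow z (Pos.to_nat p)
  | Zneg p => / cpow z (Pos.to_nat p)
  end.

Definition eit (t : R) : C := (cos t, sin t).
Definition Ci : C := (0%R, 1%R).

(* counterclockwise contour integral over the unit circle, parametrised by
   z = e^{it}, t in [0, 2 pi], dz = i e^{it} dt  (Riemann integral of a C-valued map) *)
Definition circ_int (f : C -> C) : C :=
  RInt (V := C_R_CompleteNormedModule) (fun t => f (eit t) * (Ci * eit t)) 0 (2 * PI).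

Definition rapid_decay (a : Z -> C) : Prop :=
  forall (k : nat) (eps : R), (0 < eps)%R ->
    exists N : Z, forall n : Z, (N <= Z.abs n)%Z ->
      (IZR (Z.abs n) ^ k * Cmod (a n) < eps)%R.

(* system (Q): v_n = T_n(z) v_{n+1} *)
Definition Qstep (q r : Z -> C) (n : Z) (z : C) (w : vec2) : vec2 :=
  ( z * comp1 w + (z - / z) * q n * comp2 w ,
    z * r n * comp1 w + (/ z + (z - / z) * q n * r n) * comp2 w ).

Definition solves_Q (q r : Z -> C) (z : C) (v : Z -> vec2) : Prop :=
  forall n : Z, v n = Qstep q r n z (v (n + 1)%Z).

Definition cv_pinf (a : Z -> C) (l : C) : Prop :=
  forall eps : R, (0 < eps)%R ->
    exists N : Z, forall n : Z, (N <= n)%Z -> (Cmod (a n - l) < eps)%R.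

Definition jost_psi (q r : Z -> C) (psi : Z -> C -> vec2) : Prop :=
  forall z : C, Cmod z = 1%R ->
    solves_Q q r z (fun n => psi n z) /\
    cv_pinf (fun n => comp1 (psi n z)) 0 /\
    cv_pinf (fun n => zpow z (- n) * comp2 (psi n z)) 1.

Definition jost_psibar (q r : Z -> C) (psib : Z -> C -> vec2) : Prop :=
  forall z : C, Cmod z = 1%R ->
    solves_Q q r z (fun n => psib n z) /\
    cv_pinf (fun n => zpow z n * comp1 (psib n z)) 1 /\
    cv_pinf (fun n => comp2 (psib n z)) 0.

Definition twopii : C := 2 * RtoC PI * Ci.
Definition Kc (psi : Z -> C -> vec2) (n m : Z) : vec2 :=
  ( / twopii * circ_int (fun z => comp1 (psi n z) * zpow z (- m - 1)),
    / twopii * circ_int (fun z => comp2 (psi n z) * zpow z (- m - 1)) ).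
Definition Kbc (psib : Z -> C -> vec2) (n m : Z) : vec2 :=
  ( / twopii * circ_int (fun z => comp1 (psib n z) * zpow z (m - 1)),
    / twopii * circ_int (fun z => comp2 (psib n z) * zpow z (m - 1)) ).

(* [Mbar_{nm} M_{nm}] := [Kbar_{nn} K_{nn}]^{-1} [Kbar_{nm} K_{nm}]
   (2x2 inverse written out: A = [a b; c d] with columns a c = Kbar_nn, b d = K_nn) *)
Definition inv2_apply (col1 col2 v : vec2) : vec2 :=
  let a := comp1 col1 in let c := comp2 col1 in
  let b := comp1 col2 in let d := comp2 col2 in
  let det := a * d - b * c in
  ( / det * (d * comp1 v - b * comp2 v), / det * (- c * comp1 v + a * comp2 v) ).

Definition Mbar (psi psib : Z -> C -> vec2) (n m : Z) : vec2 :=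
  inv2_apply (Kbc psib n n) (Kc psi n n) (Kbc psib n m).
Definition Mc (psi psib : Z -> C -> vec2) (n m : Z) : vec2 :=
  inv2_apply (Kbc psib n n) (Kc psi n n) (Kc psi n m).

Definition zsum_from (n : Z) (a : Z -> C) (S : C) : Prop :=
  is_series (K := R_AbsRing) (V := C_R_NormedModule)
    (fun k : nat => a (n + Z.of_nat k)%Z) S.

(* Main.v *)
Require Import Defs.
From Stdlib Require Import Reals ZArith Lra Lia.
From Coquelicot Require Import Coquelicot.
Open Scope C_scope.


Open Scope C_scope.

Lemma Ceq (a b : C) : fst a = fst b -> snd a = snd b -> a = b.
Proof. destruct a, b; simpl; intros; subst; auto. Qed.

Lemma eit_add (a b : R) : eit a * eit b = eit (a + b).
Proof. unfold eit; apply Ceq; simpl; rewrite ?cos_plus, ?sin_plus; ring. Qed.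

Lemma eit_0 : eit 0 = 1.
Proof. unfold eit; rewrite cos_0, sin_0; reflexivity. Qed.

Lemma Cmod_eit (a : R) : Cmod (eit a) = 1%R.
Proof. unfold eit, Cmod; simpl.
  pose proof (sin2_cos2 a). unfold Rsqr in H.
  replace (cos a * (cos a * 1) + sin a * (sin a * 1))%R with 1%R by lra. apply sqrt_1. Qed.

Lemma eit_neq0 (a : R) : eit a <> 0.
Proof. intro H. pose proof (Cmod_eit a). rewrite H, Cmod_0 in H0. lra. Qed.

Lemma eit_inv (a : R) : / eit a = eit (- a).
Proof. assert (H := eit_add a (-a)). rewrite Rplus_opp_r, eit_0 in H.
  assert (eit a <> 0) by apply eit_neq0.
  rewrite <- (Cmult_1_l (/ eit a)), <- H. field. auto. Qed.

Lemma cpow_eit (a : R) (n : nat) : cpow (eit a) n = eit (INR n * a).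
Proof. induction n; simpl cpow.
  - rewrite Rmult_0_l, eit_0; auto.
  - rewrite IHn, eit_add, S_INR. f_equal; ring. Qed.

Lemma zpow_eit (a : R) (k : Z) : zpow (eit a) k = eit (IZR k * a).
Proof. destruct k; simpl zpow.
  - rewrite Rmult_0_l, eit_0; auto.
  - rewrite cpow_eit. f_equal. rewrite <- positive_nat_Z, <- INR_IZR_INZ. auto.
  - rewrite cpow_eit, eit_inv. f_equal. rewrite <- Pos2Z.opp_pos, opp_IZR,
      <- positive_nat_Z, <- INR_IZR_INZ. ring. Qed.

Lemma Cmod_zpow (z : C) (k : Z) : Cmod z = 1%R -> Cmod (zpow z k) = 1%R.
Proof. intros Hz. assert (Hc : forall n, Cmod (cpow z n) = 1%R).
  { induction n; simpl. apply Cmod_1. rewrite Cmod_mult, IHn, Hz; ring. }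
  destruct k; simpl. apply Cmod_1. apply Hc.
  rewrite Cmod_inv. rewrite Hc; apply Rinv_1.
  intro H. specialize (Hc (Pos.to_nat p)). rewrite H, Cmod_0 in Hc. lra. Qed.

Fixpoint csum (f : nat -> C) (J : nat) : C :=
  match J with O => 0 | S J' => csum f J' + f J' end.

Lemma csum_ext f g J : (forall k, (k < J)%nat -> f k = g k) -> csum f J = csum g J.
Proof. induction J; simpl; intros; auto. rewrite IHJ, H; auto; intros; apply H; lia. Qed.

Lemma csum_plus f g J : csum (fun k => f k + g k) J = csum f J + csum g J.
Proof. induction J; simpl. ring. rewrite IHJ; ring. Qed.

Lemma csum_minus f g J : csum (fun k => f k - g k) J = csum f J - csum g J.
Proof. induction J; simpl. ring. rewrite IHJ; ring. Qed.

Lemma csum_scal c f J : csum (fun k => c * f k) J = c * csum f J.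
Proof. induction J; simpl. ring. rewrite IHJ; ring. Qed.

Lemma csum_zero (f : nat -> C) J : (forall k, (k < J)%nat -> f k = 0) -> csum f J = 0.
Proof. intros. rewrite (csum_ext f (fun _ => 0)) by (intros; apply H; auto). clear H. induction J; simpl; auto.
  rewrite IHJ. ring. Qed.

Lemma csum_extend (f : nat -> C) J J' : (J <= J')%nat -> (forall k, (J <= k)%nat -> f k = 0) ->
  csum f J' = csum f J.
Proof. intros HJ Hz. induction HJ; auto. simpl. rewrite IHHJ, Hz; [ring|lia]. Qed.

Lemma csum_shift f J : csum f (S J) = f O + csum (fun k => f (S k)) J.
Proof. induction J. simpl; ring. change (csum f (S (S J))) with (csum f (S J) + f (S J)).
  rewrite IHJ; simpl; ring. Qed.

Fixpoint rsum (f : nat -> R) (J : nat) : R :=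
  match J with O => 0%R | S J' => (rsum f J' + f J')%R end.

Lemma rsum_ext f g J : (forall k, (k < J)%nat -> f k = g k) -> rsum f J = rsum g J.
Proof. induction J; simpl; intros; auto. rewrite IHJ, H; auto; intros; apply H; lia. Qed.

Lemma rsum_le f g J : (forall k, (k < J)%nat -> (f k <= g k)%R) -> (rsum f J <= rsum g J)%R.
Proof. induction J; simpl; intros. lra. assert (H1 := H J). 
  assert (rsum f J <= rsum g J)%R by (apply IHJ; intros; apply H; lia). specialize (H1 ltac:(lia)). lra. Qed.

Lemma rsum_nonneg f J : (forall k, (k < J)%nat -> (0 <= f k)%R) -> (0 <= rsum f J)%R.
Proof. induction J; simpl; intros. lra. assert (H1 := H J).
  assert (0 <= rsum f J)%R by (apply IHJ; intros; apply H; lia). specialize (H1 ltac:(lia)). lra. Qed.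

Lemma rsum_plus f g J : rsum (fun k => f k + g k)%R J = (rsum f J + rsum g J)%R.
Proof. induction J; simpl. ring. rewrite IHJ; ring. Qed.

Lemma rsum_scal c f J : rsum (fun k => c * f k)%R J = (c * rsum f J)%R.
Proof. induction J; simpl. ring. rewrite IHJ; ring. Qed.

Lemma rsum_mono f J J' : (J <= J')%nat -> (forall k, (0 <= f k)%R) -> (rsum f J <= rsum f J')%R.
Proof. intros HJ Hf. induction HJ. lra. simpl. specialize (Hf m). lra. Qed.

Lemma Cmod_csum f J : (Cmod (csum f J) <= rsum (fun k => Cmod (f k)) J)%R.
Proof. induction J; simpl. rewrite Cmod_0; lra.
  eapply Rle_trans. apply Cmod_triangle. lra. Qed.


Open Scope C_scope.

Definition Seq := nat -> C.
Definition V := (Seq * Seq)%type.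
Definition nu (J : nat) (X : Seq) : R := rsum (fun k => Cmod (X k)) J.
Definition nuV (J : nat) (v : V) : R := (nu J (fst v) + nu J (snd v))%R.
Definition ssub (X Y : Seq) : Seq := fun k => X k - Y k.
Definition vsub (u v : V) : V := (ssub (fst u) (fst v), ssub (snd u) (snd v)).
Definition shift2 (X : Seq) : Seq := fun k => match k with S (S k') => X k' | _ => 0 end.
Definition delta0 : Seq := fun k => match k with O => 1 | _ => 0 end.
Definition zseq : Seq := fun _ => 0.

Lemma nu_nonneg J X : (0 <= nu J X)%R.
Proof. apply rsum_nonneg; intros; apply Cmod_ge_0. Qed.

Lemma nuV_nonneg J v : (0 <= nuV J v)%R.
Proof. unfold nuV; pose proof (nu_nonneg J (fst v)); pose proof (nu_nonneg J (snd v)); lra. Qed.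

Lemma rsum_shift f J : rsum f (S J) = (f O + rsum (fun k => f (S k)) J)%R.
Proof. induction J. simpl; ring. change (rsum f (S (S J))) with (rsum f (S J) + f (S J))%R.
  rewrite IHJ; simpl; ring. Qed.

Lemma nu_shift2 J X : (nu J (shift2 X) <= nu J X)%R.
Proof. unfold nu. eapply Rle_trans. apply (rsum_mono _ J (S (S J))); [lia| intros; apply Cmod_ge_0].
  rewrite rsum_shift, rsum_shift. simpl. rewrite Cmod_0. 
  right. ring_simplify. apply rsum_ext. auto. Qed.

Lemma nu_plus J (X Y : Seq) : (nu J (fun k => (X k + Y k)%C) <= nu J X + nu J Y)%R.
Proof. unfold nu. rewrite <- rsum_plus. apply rsum_le. intros; apply Cmod_triangle. Qed.

Lemma nu_minus J (X Y : Seq) : (nu J (fun k => (X k - Y k)%C) <= nu J X + nu J Y)%R.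
Proof. unfold nu. rewrite <- rsum_plus. apply rsum_le. intros.
  unfold Cminus. eapply Rle_trans. apply Cmod_triangle. rewrite Cmod_opp. lra. Qed.

Lemma nu_scal J (c : C) (X : Seq) : nu J (fun k => c * X k) = (Cmod c * nu J X)%R.
Proof. unfold nu. rewrite <- rsum_scal. apply rsum_ext. intros; apply Cmod_mult. Qed.

Lemma nu_ext J (X Y : Seq) : (forall k, X k = Y k) -> nu J X = nu J Y.
Proof. intros; unfold nu; apply rsum_ext; intros; rewrite H; auto. Qed.

Lemma nu_le_ext J (X Y : Seq) : (forall k, Cmod (X k) <= Cmod (Y k))%R -> (nu J X <= nu J Y)%R.
Proof. intros; unfold nu; apply rsum_le; auto. Qed.

Lemma nu_zseq J : nu J zseq = 0%R.
Proof. unfold nu, zseq. induction J; simpl; auto. rewrite IHJ, Cmod_0; ring. Qed.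

Lemma nu_delta0 J : (nu J delta0 <= 1)%R.
Proof. unfold nu. destruct J. simpl; lra. rewrite rsum_shift. simpl. rewrite Cmod_1.
  assert (H : rsum (fun _ => Cmod 0) J = 0%R).
  { induction J; simpl; auto. rewrite IHJ, Cmod_0; ring. }
  rewrite H; lra. Qed.

Lemma nu_tri J (X Y Z : Seq) : (nu J (ssub X Z) <= nu J (ssub X Y) + nu J (ssub Y Z))%R.
Proof. unfold nu, ssub. rewrite <- rsum_plus. apply rsum_le. intros.
  replace (X k - Z k) with ((X k - Y k) + (Y k - Z k)) by ring. apply Cmod_triangle. Qed.

Lemma nuV_tri J u v w : (nuV J (vsub u w) <= nuV J (vsub u v) + nuV J (vsub v w))%R.
Proof. unfold nuV, vsub; simpl. pose proof (nu_tri J (fst u) (fst v) (fst w)).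
  pose proof (nu_tri J (snd u) (snd v) (snd w)). lra. Qed.

Lemma nuV_self J v : nuV J (vsub v v) = 0%R.
Proof. unfold nuV, vsub, ssub; simpl.
  rewrite (nu_ext J (fun k => fst v k - fst v k) zseq) by (intros; unfold zseq; ring).
  rewrite (nu_ext J (fun k => snd v k - snd v k) zseq) by (intros; unfold zseq; ring).
  rewrite nu_zseq; ring. Qed.

Fixpoint it (St : Z -> V -> V) (b : V) (m : nat) (n : Z) : V :=
  match m with O => b | S m' => St n (it St b m' (n + 1)%Z) end.

Fixpoint Pr (G : Z -> R) (n : Z) (m : nat) : R :=
  match m with O => 1%R | S m' => (G n * Pr G (n + 1)%Z m')%R end.

Lemma Pr_ge1 G n m : (forall k, 1 <= G k)%R -> (1 <= Pr G n m)%R.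
Proof. intros HG; revert n; induction m; simpl; intros. lra.
  specialize (IHm (n+1)%Z). specialize (HG n). nra. Qed.

Lemma it_bound1 St b G (HG : forall k, (1 <= G k)%R)
  (HN : forall n J u v, (nuV J (vsub (St n u) (St n v)) <= G n * nuV J (vsub u v))%R)
  (HB : forall n J, (nuV J (vsub (St n b) b) <= G n - 1)%R) :
  forall m n J, (nuV J (vsub (it St b m n) b) <= Pr G n m - 1)%R.
Proof. induction m; intros; simpl.
  - rewrite nuV_self; lra.
  - eapply Rle_trans. apply (nuV_tri _ _ (St n b)).
    pose proof (HN n J (it St b m (n+1)%Z) b). pose proof (HB n J).
    pose proof (IHm (n+1)%Z J). pose proof (HG n). nra. Qed.

Lemma it_bound2 St b G (HG : forall k, (1 <= G k)%R)
  (HN : forall n J u v, (nuV J (vsub (St n u) (St n v)) <= G n * nuV J (vsub u v))%R)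
  (HB : forall n J, (nuV J (vsub (St n b) b) <= G n - 1)%R) :
  forall m p n J, (nuV J (vsub (it St b (m + p) n) (it St b m n)) <= Pr G n m * (Pr G (n + Z.of_nat m) p - 1))%R.
Proof. induction m; intros; simpl.
  - rewrite Z.add_0_r. rewrite Rmult_1_l. apply it_bound1; auto.
  - eapply Rle_trans. apply HN. 
    replace (n + Z.pos (Pos.of_succ_nat m))%Z with (n + 1 + Z.of_nat m)%Z by lia.
    pose proof (IHm p (n+1)%Z J). pose proof (HG n). 
    pose proof (nuV_nonneg J (vsub (it St b (m + p) (n + 1)) (it St b m (n + 1)))). nra. Qed.

Lemma Pr_exp G n m : (forall k, 1 <= G k)%R ->
  (Pr G n m <= exp (rsum (fun i => G (n + Z.of_nat i)%Z - 1) m))%R.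
Proof. intros HG. revert n; induction m; intros; cbn [Pr]. simpl; rewrite exp_0; lra.
  rewrite rsum_shift. rewrite exp_plus. 
  replace (rsum (fun k => G (n + Z.of_nat (S k))%Z - 1) m)%R with
    (rsum (fun i => G (n + 1 + Z.of_nat i)%Z - 1) m)%R.
  2:{ apply rsum_ext; intros. f_equal. f_equal. lia. }
  simpl (Z.of_nat 0). rewrite Z.add_0_r. pose proof (IHm (n+1)%Z). pose proof (Pr_ge1 G (n+1)%Z m HG).
  assert (G n <= exp (G n - 1))%R. { pose proof (exp_ineq1_le (G n - 1)). lra. }
  pose proof (HG n). apply Rmult_le_compat; lra. Qed.

Lemma Pr_m1 G n m : (forall k, 1 <= G k)%R ->
  (Pr G n m - 1 <= rsum (fun i => G (n + Z.of_nat i)%Z - 1) m * Pr G n m)%R.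
Proof. intros HG. revert n; induction m; intros; cbn [Pr]. simpl; lra.
  rewrite rsum_shift. simpl (Z.of_nat 0). rewrite Z.add_0_r.
  replace (rsum (fun k => G (n + Z.of_nat (S k))%Z - 1) m)%R with
    (rsum (fun i => G (n + 1 + Z.of_nat i)%Z - 1) m)%R.
  2:{ apply rsum_ext; intros. f_equal. f_equal. lia. }
  pose proof (IHm (n+1)%Z). pose proof (Pr_ge1 G (n+1)%Z m HG). pose proof (HG n).
  assert (0 <= rsum (fun i => G (n + 1 + Z.of_nat i)%Z - 1) m)%R.
  { apply rsum_nonneg; intros. pose proof (HG (n + 1 + Z.of_nat k)%Z); lra. }
  set (P := Pr G (n + 1) m) in *. set (S' := rsum (fun i => (G (n + 1 + Z.of_nat i)%Z - 1)%R) m) in *.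
  assert (0 <= (G n - 1) * P * (G n - 1))%R by (apply Rmult_le_pos; [apply Rmult_le_pos|]; lra).
  assert (S' * P <= S' * (G n * P))%R by (apply Rmult_le_compat_l; nra).
  nra. Qed.


Open Scope C_scope.

Definition Gqr (q r : Z -> C) (k : Z) : R := ((1 + 2 * Cmod (q k)) * (1 + Cmod (r k)))%R.

Lemma Gqr_ge1 q r k : (1 <= Gqr q r k)%R.
Proof. unfold Gqr. pose proof (Cmod_ge_0 (q k)); pose proof (Cmod_ge_0 (r k)). nra. Qed.

Lemma rapid_small (a : Z -> C) : rapid_decay a ->
  exists N, forall n, (N <= n)%Z -> (Cmod (a n) <= / (IZR n ^ 2))%R.
Proof. intros H. destruct (H 2%nat 1%R Rlt_0_1) as [N HN]. exists (Z.max N 1).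
  intros n Hn. assert (HN' := HN n ltac:(lia)). rewrite Z.abs_eq in HN' by lia.
  assert (0 < IZR n) by (apply IZR_lt; lia).
  assert (0 < IZR n ^ 2)%R by (apply pow_lt; auto).
  apply (Rmult_le_reg_l (IZR n ^ 2)); auto. rewrite Rinv_r by lra. lra. Qed.

Definition decayG (G : Z -> R) : Prop :=
  exists N1, (2 <= N1)%Z /\ forall k, (N1 <= k)%Z -> (G k - 1 <= 5 / (IZR k ^ 2))%R.

Lemma decay_Gqr q r : rapid_decay q -> rapid_decay r -> decayG (Gqr q r).
Proof. intros Hq Hr. destruct (rapid_small q Hq) as [Nq Hq']. destruct (rapid_small r Hr) as [Nr Hr'].
  exists (Z.max 2 (Z.max Nq Nr)). split. lia. intros k Hk.
  assert (h1 := Hq' k ltac:(lia)). assert (h2 := Hr' k ltac:(lia)).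
  assert (2 <= IZR k)%R by (apply IZR_le; lia).
  assert (4 <= IZR k ^ 2)%R by nra.
  assert (/ (IZR k ^ 2) <= 1)%R. { apply (Rmult_le_reg_l (IZR k ^ 2)); [lra|]. rewrite Rinv_r by lra. lra. }
  pose proof (Cmod_ge_0 (q k)); pose proof (Cmod_ge_0 (r k)).
  unfold Gqr. unfold Rdiv. set (u := (/ IZR k ^ 2)%R) in *.
  assert (Cmod (q k) * Cmod (r k) <= u)%R by nra. nra. Qed.

Lemma rsum_split f a b : rsum f (a + b) = (rsum f a + rsum (fun i => f (a + i)%nat) b)%R.
Proof. induction b; simpl. rewrite Nat.add_0_r; ring. rewrite Nat.add_succ_r. simpl. rewrite IHb. ring. Qed.

Definition T5 (N : Z) : R := (5 / (IZR N - 1))%R.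

Lemma tail_sum G N p :
  (forall N1, (2 <= N1)%Z -> (forall k, (N1 <= k)%Z -> (G k - 1 <= 5 / (IZR k ^ 2))%R) -> (N1 <= N)%Z ->
  (rsum (fun i => G (N + Z.of_nat i)%Z - 1) p <= T5 N)%R).
Proof. intros N1 H2 HN1 HN.
  set (a := fun i : nat => (/ (IZR (N + Z.of_nat i) - 1))%R).
  assert (Hb : forall i, (G (N + Z.of_nat i)%Z - 1 <= 5 * (a i - a (S i)))%R).
  { intros i. unfold a. replace (N + Z.of_nat (S i))%Z with (N + Z.of_nat i + 1)%Z by lia.
    eapply Rle_trans. apply HN1. lia. rewrite (plus_IZR _ 1). set (x := IZR (N + Z.of_nat i)).
    assert (2 <= x)%R by (unfold x; apply IZR_le; lia).
    replace (x + 1 - 1)%R with x by ring.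
    assert (/ (x - 1) - / x = / (x * (x-1)))%R by (field; lra). rewrite H0.
    unfold Rdiv. apply Rmult_le_compat_l. lra. apply Rinv_le_contravar. nra. simpl. nra. }
  assert (Htel : forall p, rsum (fun i => 5 * (a i - a (S i)))%R p = (5 * (a O - a p))%R).
  { induction p0; simpl. ring. rewrite IHp0. ring. }
  eapply Rle_trans. apply rsum_le. intros k _. apply Hb. rewrite Htel. unfold T5, a.
  assert (2 <= IZR (N + Z.of_nat p))%R by (apply IZR_le; lia).
  assert (0 < / (IZR (N + Z.of_nat p) - 1))%R by (apply Rinv_0_lt_compat; lra).
  rewrite Z.add_0_r. unfold Rdiv. lra. Qed.

Lemma T5_le5 N : (2 <= N)%Z -> (0 <= T5 N <= 5)%R.
Proof. intros. unfold T5. assert (2 <= IZR N)%R by (apply IZR_le; lia).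
  split. apply Rlt_le, Rdiv_lt_0_compat; lra.
  unfold Rdiv. rewrite <- (Rmult_1_r 5) at 2. apply Rmult_le_compat_l. lra.
  rewrite <- Rinv_1. apply Rinv_le_contravar; lra. Qed.

Lemma T5_lim eps : (0 < eps)%R -> exists N, (2 <= N)%Z /\ forall n, (N <= n)%Z -> (T5 n < eps)%R.
Proof. intros He. destruct (archimed (5 / eps)) as [H1 _].
  exists (Z.max 2 (up (5 / eps) + 1)). split. lia. intros n Hn.
  assert (IZR (up (5/eps)) + 1 <= IZR n)%R by (rewrite <- plus_IZR; apply IZR_le; lia).
  assert (2 <= IZR n)%R by (apply IZR_le; lia).
  unfold T5. apply (Rmult_lt_reg_r (IZR n - 1)). lra. unfold Rdiv. rewrite Rmult_assoc, Rinv_l by lra.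
  assert (5 / eps * eps = 5)%R by (field; lra). nra. Qed.

Lemma sum_bounded G n : (forall k, 1 <= G k)%R -> decayG G ->
  exists B, forall m, (rsum (fun i => G (n + Z.of_nat i)%Z - 1) m <= B)%R.
Proof. intros HG [N1 [H2 HN1]]. set (i0 := Z.to_nat (N1 - n)).
  exists (rsum (fun i => G (n + Z.of_nat i)%Z - 1) i0 + 5)%R. intros m.
  assert (Hnn : forall k, (0 <= G (n + Z.of_nat k)%Z - 1)%R) by (intros; pose proof (HG (n + Z.of_nat k)%Z); lra).
  destruct (Nat.le_gt_cases m i0).
  - pose proof (rsum_mono (fun i => G (n + Z.of_nat i)%Z - 1)%R m i0 H Hnn). lra.
  - replace m with (i0 + (m - i0))%nat by lia. rewrite rsum_split.
    assert (rsum (fun i => G (n + Z.of_nat (i0 + i))%Z - 1)%R (m - i0) <= T5 (n + Z.of_nat i0))%R.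
    { rewrite (rsum_ext _ (fun i => G (n + Z.of_nat i0 + Z.of_nat i)%Z - 1)%R).
      apply (tail_sum G _ _ N1); auto. unfold i0; lia.
      intros; f_equal; f_equal; lia. }
    pose proof (T5_le5 (n + Z.of_nat i0) ltac:(unfold i0; lia)). lra. Qed.

Lemma exp_mono x y : (x <= y)%R -> (exp x <= exp y)%R.
Proof. intros [H|H]. left; apply exp_increasing; auto. subst; lra. Qed.

Lemma gen_cauchy St b G (HG : forall k, (1 <= G k)%R)
  (HN : forall n J u v, (nuV J (vsub (St n u) (St n v)) <= G n * nuV J (vsub u v))%R)
  (HB : forall n J, (nuV J (vsub (St n b) b) <= G n - 1)%R) (Hd : decayG G) :
  forall n, exists C0 M0, (0 < C0)%R /\ (2 <= n + Z.of_nat M0)%Z /\ forall m p J, (M0 <= m)%nat ->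
   (nuV J (vsub (it St b (m + p) n) (it St b m n)) <= C0 * T5 (n + Z.of_nat m))%R.
Proof. intros n. destruct (sum_bounded G n HG Hd) as [B HBd]. destruct Hd as [N1 [H2 HN1]].
  exists (exp B * exp 5)%R, (Z.to_nat (N1 - n)). split. apply Rmult_lt_0_compat; apply exp_pos.
  split. lia. intros m p J Hm.
  eapply Rle_trans. apply it_bound2; auto.
  assert (Pr G n m <= exp B)%R. { eapply Rle_trans. apply Pr_exp; auto. apply exp_mono. apply HBd. }
  pose proof (Pr_m1 G (n + Z.of_nat m) p HG).
  pose proof (tail_sum G (n + Z.of_nat m) p N1 H2 HN1 ltac:(lia)).
  pose proof (Pr_exp G (n + Z.of_nat m) p HG).
  pose proof (T5_le5 (n + Z.of_nat m) ltac:(lia)).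
  assert (Pr G (n + Z.of_nat m) p <= exp 5)%R. { eapply Rle_trans. eauto. apply exp_mono. lra. }
  pose proof (Pr_ge1 G n m HG). pose proof (Pr_ge1 G (n + Z.of_nat m) p HG).
  set (S := rsum (fun i => G (n + Z.of_nat m + Z.of_nat i)%Z - 1)%R p) in *.
  assert (0 <= S)%R. { apply rsum_nonneg. intros; pose proof (HG (n + Z.of_nat m + Z.of_nat k)%Z); lra. }
  assert (Pr G (n + Z.of_nat m) p - 1 <= T5 (n + Z.of_nat m) * exp 5)%R.
  { eapply Rle_trans. eauto. apply Rmult_le_compat; lra. }
  assert (0 <= Pr G (n + Z.of_nat m) p - 1)%R by lra.
  replace (exp B * exp 5 * T5 (n + Z.of_nat m))%R with (exp B * (T5 (n + Z.of_nat m) * exp 5))%R by ring.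
  apply Rmult_le_compat; lra. Qed.

Lemma gen_asym St b G (HG : forall k, (1 <= G k)%R)
  (HN : forall n J u v, (nuV J (vsub (St n u) (St n v)) <= G n * nuV J (vsub u v))%R)
  (HB : forall n J, (nuV J (vsub (St n b) b) <= G n - 1)%R) (Hd : decayG G) :
  exists N1, (2 <= N1)%Z /\ forall n m J, (N1 <= n)%Z -> (nuV J (vsub (it St b m n) b) <= exp 5 * T5 n)%R.
Proof. destruct Hd as [N1 [H2 HN1]]. exists N1. split; auto. intros n m J Hn.
  eapply Rle_trans. apply it_bound1; auto.
  pose proof (Pr_m1 G n m HG). pose proof (tail_sum G n m N1 H2 HN1 Hn).
  pose proof (Pr_exp G n m HG). pose proof (T5_le5 n ltac:(lia)).
  assert (Pr G n m <= exp 5)%R. { eapply Rle_trans. eauto. apply exp_mono. lra. }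
  set (S := rsum (fun i => G (n + Z.of_nat i)%Z - 1)%R m) in *.
  assert (0 <= S)%R. { apply rsum_nonneg. intros; pose proof (HG (n + Z.of_nat k)%Z); lra. }
  pose proof (Pr_ge1 G n m HG).
  eapply Rle_trans. eauto. rewrite Rmult_comm. apply Rmult_le_compat; lra. Qed.


Open Scope C_scope.

Definition clim_to (u : nat -> C) (L : C) : Prop :=
  forall eps : R, (0 < eps)%R -> exists M, forall m, (M <= m)%nat -> (Cmod (u m - L) < eps)%R.

Definition clim (u : nat -> C) : C := (real (Lim_seq (fun m => fst (u m))), real (Lim_seq (fun m => snd (u m)))).

Lemma Cmod_le_sum (z : C) : (Cmod z <= Rabs (fst z) + Rabs (snd z))%R.
Proof. destruct z as [a b]. unfold Cmod; simpl.
  pose proof (Rabs_pos a); pose proof (Rabs_pos b).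
  rewrite <- (sqrt_square (Rabs a + Rabs b)) by lra. apply sqrt_le_1_alt.
  assert (a * a = Rabs a * Rabs a)%R by (rewrite <- Rabs_mult; rewrite Rabs_right; nra).
  assert (b * b = Rabs b * Rabs b)%R by (rewrite <- Rabs_mult; rewrite Rabs_right; nra).
  nra. Qed.

Lemma fst_le_Cmod (z : C) : (Rabs (fst z) <= Cmod z)%R.
Proof. apply re_le_Cmod. Qed.
Lemma snd_le_Cmod (z : C) : (Rabs (snd z) <= Cmod z)%R.
Proof. apply (Rle_trans _ _ _ (Rmax_r _ _) (Rmax_Cmod z)). Qed.

Lemma real_cauchy (w : nat -> R) (δ : nat -> R) M0 :
  (forall m p, (M0 <= m)%nat -> (Rabs (w (m + p)%nat - w m) <= δ m)%R) ->
  (forall eps, (0 < eps)%R -> exists M, forall m, (M <= m)%nat -> (δ m < eps)%R) ->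
  is_lim_seq w (real (Lim_seq w)).
Proof. intros H1 H2. apply Lim_seq_correct'. apply ex_lim_seq_cauchy_corr.
  intros eps. destruct (H2 (eps/2)%R ltac:(destruct eps; simpl; lra)) as [M HM].
  exists (max M M0). intros n m Hn Hm.
  assert (Hh : forall a c, (max M M0 <= a)%nat -> (a <= c)%nat -> (Rabs (w c - w a) < eps / 2)%R).
  { intros a c Ha Hc. replace c with (a + (c - a))%nat by lia.
    eapply Rle_lt_trans. apply H1; lia. apply HM; lia. }
  destruct (Nat.le_ge_cases n m).
  - rewrite Rabs_minus_sym. eapply Rlt_trans. apply Hh; eauto. destruct eps; simpl; lra.
  - eapply Rlt_trans. apply Hh; eauto. destruct eps; simpl; lra. Qed.

Lemma clim_exists (u : nat -> C) (δ : nat -> R) M0 :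
  (forall m p, (M0 <= m)%nat -> (Cmod (u (m + p)%nat - u m) <= δ m)%R) ->
  (forall eps, (0 < eps)%R -> exists M, forall m, (M <= m)%nat -> (δ m < eps)%R) ->
  clim_to u (clim u).
Proof. intros H1 H2.
  assert (A1 := real_cauchy (fun m => fst (u m)) δ M0).
  assert (A2 := real_cauchy (fun m => snd (u m)) δ M0).
  specialize (A1 ltac:(intros m p Hm; eapply Rle_trans; [|apply (H1 m p Hm)]; apply (fst_le_Cmod (u (m+p)%nat - u m))) H2).
  specialize (A2 ltac:(intros m p Hm; eapply Rle_trans; [|apply (H1 m p Hm)]; apply (snd_le_Cmod (u (m+p)%nat - u m))) H2).
  apply is_lim_seq_spec in A1. apply is_lim_seq_spec in A2.
  intros eps He. destruct (A1 (mkposreal (eps/2) ltac:(lra))) as [N1 HN1].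
  destruct (A2 (mkposreal (eps/2) ltac:(lra))) as [N2 HN2].
  exists (max N1 N2). intros m Hm. eapply Rle_lt_trans. apply Cmod_le_sum.
  specialize (HN1 m ltac:(lia)). specialize (HN2 m ltac:(lia)). simpl in *. unfold Rminus in *. lra. Qed.

Lemma small_zero (x : C) : (forall eps, (0 < eps)%R -> (Cmod x < eps)%R) -> x = 0.
Proof. intros H. apply Cmod_eq_0. pose proof (Cmod_ge_0 x).
  destruct H0; auto. specialize (H _ H0). lra. Qed.

Lemma clim_bound u L v c M : clim_to u L -> (forall m, (M <= m)%nat -> (Cmod (u m - v) <= c)%R) ->
  (Cmod (L - v) <= c)%R.
Proof. intros HL Hb. apply Rnot_lt_le. intros Hc.
  destruct (HL (Cmod (L - v) - c)%R ltac:(lra)) as [M' HM'].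
  specialize (HM' (max M M')%nat ltac:(lia)). specialize (Hb (max M M') ltac:(lia)).
  assert (Cmod (L - v) <= Cmod (L - u (max M M')) + Cmod (u (max M M') - v))%R.
  { replace (L - v) with ((L - u (max M M')) + (u (max M M') - v)) by ring. apply Cmod_triangle. }
  rewrite <- Cmod_opp in HM'. replace (- (u (Init.Nat.max M M') - L)) with (L - u (max M M')) in HM' by ring.
  lra. Qed.

Lemma clim_unique u L L' : clim_to u L -> clim_to u L' -> L = L'.
Proof. intros H1 H2. cut (L - L' = 0). { intros H. replace L with (L - L' + L') by ring. rewrite H; ring. }
  apply small_zero. intros eps He.
  destruct (H1 (eps/2)%R ltac:(lra)) as [M1 HM1]. destruct (H2 (eps/2)%R ltac:(lra)) as [M2 HM2].
  specialize (HM1 (max M1 M2) ltac:(lia)). specialize (HM2 (max M1 M2) ltac:(lia)).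
  replace (L - L') with (- (u (max M1 M2) - L) + (u (max M1 M2) - L')) by ring.
  eapply Rle_lt_trans. apply Cmod_triangle. rewrite Cmod_opp. lra. Qed.

Lemma clim_ext u v L : (exists M, forall m, (M <= m)%nat -> u m = v m) -> clim_to u L -> clim_to v L.
Proof. intros [M HM] H eps He. destruct (H eps He) as [M' HM']. exists (max M M'). intros m Hm.
  rewrite <- HM by lia. apply HM'; lia. Qed.

Lemma clim_shift u L : clim_to u L -> clim_to (fun m => u (S m)) L.
Proof. intros H eps He. destruct (H eps He) as [M HM]. exists M. intros; apply HM; lia. Qed.

Lemma clim_unshift u L : clim_to (fun m => u (S m)) L -> clim_to u L.
Proof. intros H eps He. destruct (H eps He) as [M HM]. exists (S M). intros m Hm.
  destruct m. lia. apply HM; lia. Qed.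

Lemma clim_const c : clim_to (fun _ => c) c.
Proof. intros eps He. exists O. intros. replace (c - c) with (RtoC 0) by ring. rewrite Cmod_0; auto. Qed.

Lemma clim_plus u v L L' : clim_to u L -> clim_to v L' -> clim_to (fun m => u m + v m) (L + L').
Proof. intros H1 H2 eps He.
  destruct (H1 (eps/2)%R ltac:(lra)) as [M1 HM1]. destruct (H2 (eps/2)%R ltac:(lra)) as [M2 HM2].
  exists (max M1 M2). intros m Hm. specialize (HM1 m ltac:(lia)). specialize (HM2 m ltac:(lia)).
  replace (u m + v m - (L + L')) with ((u m - L) + (v m - L')) by ring.
  eapply Rle_lt_trans. apply Cmod_triangle. lra. Qed.

Lemma clim_scal c u L : clim_to u L -> clim_to (fun m => c * u m) (c * L).
Proof. intros H eps He. destruct (H (eps / (Cmod c + 1))%R) as [M HM].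
  { apply Rdiv_lt_0_compat; auto. pose proof (Cmod_ge_0 c); lra. }
  exists M. intros m Hm. specialize (HM m Hm).
  replace (c * u m - c * L) with (c * (u m - L)) by ring. rewrite Cmod_mult.
  pose proof (Cmod_ge_0 c). pose proof (Cmod_ge_0 (u m - L)).
  apply (Rmult_lt_compat_l (Cmod c + 1)) in HM; [|lra].
  replace ((Cmod c + 1) * (eps / (Cmod c + 1)))%R with eps in HM by (field; lra). nra. Qed.

Lemma clim_opp u L : clim_to u L -> clim_to (fun m => - u m) (- L).
Proof. intros H. apply (clim_ext (fun m => (-1) * u m)). exists O; intros; ring.
  replace (- L) with ((-1) * L) by ring. apply clim_scal; auto. Qed.

Lemma clim_minus u v L L' : clim_to u L -> clim_to v L' -> clim_to (fun m => u m - v m) (L - L').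
Proof. intros. apply clim_plus; auto. apply clim_opp; auto. Qed.

Lemma clim_csum (X : nat -> nat -> C) (L : nat -> C) K :
  (forall k, (k < K)%nat -> clim_to (fun m => X m k) (L k)) ->
  clim_to (fun m => csum (X m) K) (csum L K).
Proof. induction K; intros H; simpl. apply clim_const.
  apply clim_plus. apply IHK; intros; apply H; lia. apply H; lia. Qed.

Lemma clim_exists2 (u : nat -> C) (δ : nat -> R) M0 :
  (forall m p, (M0 <= m)%nat -> (Cmod (u (m + p)%nat - u m) <= δ m)%R) ->
  (forall eps, (0 < eps)%R -> exists M, forall m, (M <= m)%nat -> (δ m < eps)%R) ->
  clim_to u (clim u) /\ forall m, (M0 <= m)%nat -> (Cmod (u m - clim u) <= δ m)%R.
Proof. intros H1 H2. assert (HL := clim_exists u δ M0 H1 H2). split; auto.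
  intros m Hm. rewrite <- Cmod_opp. replace (- (u m - clim u)) with (clim u - u m) by ring.
  apply (clim_bound u _ _ _ m HL). intros m' Hm'. replace m' with (m + (m' - m))%nat by lia. apply H1; auto. Qed.


Open Scope C_scope.

Definition Spsi (q r : Z -> C) (n : Z) (v : V) : V :=
  let A' := fun k => shift2 (fst v) k + q n * (shift2 (snd v) k - snd v k) in
  (A', fun k => snd v k + r n * A' k).
Definition bpsi : V := (zseq, delta0).

Definition Sbar (q r : Z -> C) (n : Z) (v : V) : V :=
  let C' := fun k => fst v k + q n * (snd v k - shift2 (snd v) k) in
  (C', fun k => shift2 (snd v) k + r n * C' k).
Definition bbar : V := (delta0, zseq).

Lemma nu_form1 J (X Y : Seq) (c : C) :
  (nu J (fun k => (shift2 X k + c * (shift2 Y k - Y k))%C) <= nu J X + 2 * Cmod c * nu J Y)%R.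
Proof. eapply Rle_trans. apply nu_plus. rewrite nu_scal.
  pose proof (nu_minus J (shift2 Y) Y). pose proof (nu_shift2 J X). pose proof (nu_shift2 J Y).
  pose proof (Cmod_ge_0 c). nra. Qed.

Lemma nu_form2 J (X Y : Seq) (c : C) :
  (nu J (fun k => (X k + c * (Y k - shift2 Y k))%C) <= nu J X + 2 * Cmod c * nu J Y)%R.
Proof. eapply Rle_trans. apply nu_plus. rewrite nu_scal.
  pose proof (nu_minus J Y (shift2 Y)). pose proof (nu_shift2 J Y).
  pose proof (Cmod_ge_0 c). nra. Qed.

Lemma nu_form3 J (X Y : Seq) (c : C) :
  (nu J (fun k => (X k + c * Y k)%C) <= nu J X + Cmod c * nu J Y)%R.
Proof. eapply Rle_trans. apply nu_plus. rewrite nu_scal. lra. Qed.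

Lemma nu_form4 J (X Y : Seq) (c : C) :
  (nu J (fun k => (shift2 X k + c * Y k)%C) <= nu J X + Cmod c * nu J Y)%R.
Proof. eapply Rle_trans. apply nu_plus. rewrite nu_scal. pose proof (nu_shift2 J X). lra. Qed.

Lemma Spsi_HN q r : forall n J u v,
  (nuV J (vsub (Spsi q r n u) (Spsi q r n v)) <= Gqr q r n * nuV J (vsub u v))%R.
Proof. intros n J u v. unfold nuV, vsub, Spsi, Gqr, ssub; simpl.
  set (dA := fun k => fst u k - fst v k). set (dB := fun k => snd u k - snd v k).
  set (dA' := fun k => shift2 dA k + q n * (shift2 dB k - dB k)).
  rewrite (nu_ext J _ dA').
  2:{ intros k; unfold dA', dA, dB, shift2; destruct k as [|[|k]]; ring. }
  rewrite (nu_ext J (fun k => snd u k + r n * _ - _) (fun k => dB k + r n * dA' k)).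
  2:{ intros k; unfold dA', dA, dB, shift2; destruct k as [|[|k]]; ring. }
  pose proof (nu_form1 J dA dB (q n)). fold dA' in H.
  pose proof (nu_form3 J dB dA' (r n)).
  pose proof (nu_nonneg J dA). pose proof (nu_nonneg J dB). pose proof (nu_nonneg J dA').
  pose proof (Cmod_ge_0 (q n)). pose proof (Cmod_ge_0 (r n)).
  fold dA dB. assert (Cmod (r n) * nu J dA' <= Cmod (r n) * (nu J dA + 2 * Cmod (q n) * nu J dB))%R by (apply Rmult_le_compat_l; lra).
  assert (0 <= Cmod (q n) * Cmod (r n) * nu J dA)%R by (repeat apply Rmult_le_pos; lra).
  nra. Qed.

Lemma Sbar_HN q r : forall n J u v,
  (nuV J (vsub (Sbar q r n u) (Sbar q r n v)) <= Gqr q r n * nuV J (vsub u v))%R.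
Proof. intros n J u v. unfold nuV, vsub, Sbar, Gqr, ssub; simpl.
  set (dA := fun k => fst u k - fst v k). set (dB := fun k => snd u k - snd v k).
  set (dA' := fun k => dA k + q n * (dB k - shift2 dB k)).
  rewrite (nu_ext J _ dA').
  2:{ intros k; unfold dA', dA, dB, shift2; destruct k as [|[|k]]; ring. }
  rewrite (nu_ext J (fun k => shift2 (snd u) k + r n * _ - _) (fun k => shift2 dB k + r n * dA' k)).
  2:{ intros k; unfold dA', dA, dB, shift2; destruct k as [|[|k]]; ring. }
  pose proof (nu_form2 J dA dB (q n)). fold dA' in H.
  pose proof (nu_form4 J dB dA' (r n)).
  pose proof (nu_nonneg J dA). pose proof (nu_nonneg J dB). pose proof (nu_nonneg J dA').
  pose proof (Cmod_ge_0 (q n)). pose proof (Cmod_ge_0 (r n)).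
  fold dA dB. assert (Cmod (r n) * nu J dA' <= Cmod (r n) * (nu J dA + 2 * Cmod (q n) * nu J dB))%R by (apply Rmult_le_compat_l; lra).
  assert (0 <= Cmod (q n) * Cmod (r n) * nu J dA)%R by (repeat apply Rmult_le_pos; lra).
  nra. Qed.

Lemma Spsi_HB q r : forall n J, (nuV J (vsub (Spsi q r n bpsi) bpsi) <= Gqr q r n - 1)%R.
Proof. intros n J. unfold nuV, vsub, Spsi, Gqr, ssub, bpsi; simpl.
  set (A' := fun k => shift2 zseq k + q n * (shift2 delta0 k - delta0 k)).
  rewrite (nu_ext J _ A'). 2:{ intros. unfold A', zseq. ring. }
  rewrite (nu_ext J (fun k => delta0 k + r n * (shift2 zseq k + q n * (shift2 delta0 k - delta0 k)) - delta0 k) (fun k => r n * A' k)) by (intros; unfold A'; ring).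
  rewrite nu_scal.
  assert (nu J A' <= 2 * Cmod (q n))%R.
  { unfold A'. eapply Rle_trans. apply nu_form1. rewrite nu_zseq. pose proof (nu_delta0 J).
    pose proof (Cmod_ge_0 (q n)). nra. }
  pose proof (nu_nonneg J A'). pose proof (Cmod_ge_0 (q n)). pose proof (Cmod_ge_0 (r n)). nra. Qed.

Lemma Sbar_HB q r : forall n J, (nuV J (vsub (Sbar q r n bbar) bbar) <= Gqr q r n - 1)%R.
Proof. intros n J. unfold nuV, vsub, Sbar, Gqr, ssub, bbar; simpl.
  rewrite (nu_ext J _ zseq).
  2:{ intros k; unfold zseq, shift2; destruct k as [|[|k]]; ring. }
  rewrite (nu_ext J (fun k => shift2 zseq k + r n * _ - zseq k) (fun k => r n * delta0 k)).
  2:{ intros k; unfold zseq, shift2; destruct k as [|[|k]]; ring. }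
  rewrite nu_scal, nu_zseq. pose proof (nu_delta0 J).
  pose proof (Cmod_ge_0 (q n)). pose proof (Cmod_ge_0 (r n)). nra. Qed.

Definition supp (v : V) (L : nat) : Prop := forall k, (L <= k)%nat -> fst v k = 0 /\ snd v k = 0.

Lemma shift2_supp (X : Seq) L : (forall k, (L <= k)%nat -> X k = 0) -> forall k, (S (S L) <= k)%nat -> shift2 X k = 0.
Proof. intros H k Hk. destruct k as [|[|k]]; try lia. simpl. apply H; lia. Qed.

Lemma Spsi_supp q r n v L : supp v L -> supp (Spsi q r n v) (S (S L)).
Proof. intros H k Hk. unfold Spsi; simpl.
  assert (h1 := shift2_supp (fst v) L (fun k h => proj1 (H k h)) k Hk).
  assert (h2 := shift2_supp (snd v) L (fun k h => proj2 (H k h)) k Hk).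
  assert (h3 := proj2 (H k ltac:(lia))). rewrite h1, h2, h3. split; ring. Qed.

Lemma Sbar_supp q r n v L : supp v L -> supp (Sbar q r n v) (S (S L)).
Proof. intros H k Hk. unfold Sbar; simpl.
  assert (h2 := shift2_supp (snd v) L (fun k h => proj2 (H k h)) k Hk).
  assert (h3 := proj2 (H k ltac:(lia))). assert (h4 := proj1 (H k ltac:(lia))).
  rewrite h2, h3, h4. split; ring. Qed.

Lemma it_supp St b (Hs : forall n v L, supp v L -> supp (St n v) (S (S L))) (Hb : supp b 1) :
  forall m n, supp (it St b m n) (2 * m + 1).
Proof. induction m; intros n; simpl. auto. replace (S (m + S (m + 0) + 1)) with (S (S (2 * m + 1))) by lia.
  apply Hs. apply IHm. Qed.

Lemma bpsi_supp : supp bpsi 1.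
Proof. intros k Hk. destruct k. lia. split; reflexivity. Qed.
Lemma bbar_supp : supp bbar 1.
Proof. intros k Hk. destruct k. lia. split; reflexivity. Qed.

Lemma csum_shift2 (X : Seq) (w : nat -> C) J :
  csum (fun k => shift2 X k * w k) (S (S J)) = csum (fun k => X k * w (S (S k))) J.
Proof. rewrite csum_shift, csum_shift. simpl. ring. Qed.


Open Scope C_scope.

Definition E (t : R) (a : Z) : C := eit (IZR a * t).

Lemma Cmod_E t a : Cmod (E t a) = 1%R.
Proof. apply Cmod_eit. Qed.

Lemma E_up t a : E t a = eit t * E t (a - 1).
Proof. unfold E. rewrite eit_add. f_equal. rewrite minus_IZR. ring. Qed.

Lemma E_down t a : E t a = / eit t * E t (a + 1).
Proof. unfold E. rewrite eit_inv, eit_add. f_equal. rewrite plus_IZR. ring. Qed.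

Definition evg (σ : Z) (v : V) (L : nat) (n : Z) (t : R) : vec2 :=
  (csum (fun k => fst v k * E t (σ * (n + Z.of_nat k))) L,
   csum (fun k => snd v k * E t (σ * (n + Z.of_nat k))) L).

Lemma evpsi_step q r v L n t : supp v L ->
  evg 1 (Spsi q r n v) (S (S L)) n t = Qstep q r n (eit t) (evg 1 v L (n + 1) t).
Proof. intros Hs. set (z := eit t). assert (Hz : z <> 0) by apply eit_neq0.
  set (w1 := fun k : nat => E t (1 * (n + 1 + Z.of_nat k))).
  set (A := fst v). set (B := snd v).
  set (SA := csum (fun k => A k * w1 k) L). set (SB := csum (fun k => B k * w1 k) L).
  assert (W0 : forall k, E t (1 * (n + Z.of_nat k)) = / z * w1 k).
  { intros k. unfold w1. rewrite E_down. f_equal. f_equal. lia. }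
  assert (W2 : forall k, E t (1 * (n + Z.of_nat (S (S k)))) = z * w1 k).
  { intros k. unfold w1. rewrite E_up. f_equal. f_equal. lia. }
  assert (F1 : csum (fun k => fst (Spsi q r n v) k * E t (1 * (n + Z.of_nat k))) (S (S L))
              = z * SA + q n * (z * SB - / z * SB)).
  { transitivity (csum (fun k => shift2 A k * E t (1 * (n + Z.of_nat k)) + q n * (shift2 B k * E t (1 * (n + Z.of_nat k)) - B k * E t (1 * (n + Z.of_nat k)))) (S (S L))).
    apply csum_ext; intros; unfold Spsi; simpl; fold A B; ring.
    rewrite csum_plus, csum_scal, csum_minus, !csum_shift2.
    rewrite (csum_extend (fun k => B k * _) L (S (S L))) by (try lia; intros k Hk; unfold B; rewrite (proj2 (Hs k Hk)); ring).
    unfold SA, SB. rewrite <- !csum_scal. f_equal. apply csum_ext; intros; rewrite W2; ring.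
    f_equal. f_equal; apply csum_ext; intros; rewrite ?W2, ?W0; ring. }
  assert (F2 : csum (fun k => snd (Spsi q r n v) k * E t (1 * (n + Z.of_nat k))) (S (S L))
              = / z * SB + r n * (z * SA + q n * (z * SB - / z * SB))).
  { rewrite <- F1.
    transitivity (csum (fun k => B k * E t (1 * (n + Z.of_nat k)) + r n * (fst (Spsi q r n v) k * E t (1 * (n + Z.of_nat k)))) (S (S L))).
    apply csum_ext; intros; unfold Spsi; simpl; fold A B; ring.
    rewrite csum_plus, csum_scal. f_equal.
    rewrite (csum_extend (fun k => B k * _) L (S (S L))) by (try lia; intros k Hk; unfold B; rewrite (proj2 (Hs k Hk)); ring).
    unfold SB. rewrite <- csum_scal. apply csum_ext; intros; rewrite W0; ring. }
  unfold evg, Qstep, comp1, comp2. cbn [fst snd]. rewrite F1, F2.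
  change (csum (fun k => fst v k * E t (1 * (n + 1 + Z.of_nat k))) L) with SA.
  change (csum (fun k => snd v k * E t (1 * (n + 1 + Z.of_nat k))) L) with SB.
  f_equal; field; auto. Qed.

Lemma evbar_step q r v L n t : supp v L ->
  evg (-1) (Sbar q r n v) (S (S L)) n t = Qstep q r n (eit t) (evg (-1) v L (n + 1) t).
Proof. intros Hs. set (z := eit t). assert (Hz : z <> 0) by apply eit_neq0.
  set (w1 := fun k : nat => E t (-1 * (n + 1 + Z.of_nat k))).
  set (A := fst v). set (B := snd v).
  set (SA := csum (fun k => A k * w1 k) L). set (SB := csum (fun k => B k * w1 k) L).
  assert (W0 : forall k, E t (-1 * (n + Z.of_nat k)) = z * w1 k).
  { intros k. unfold w1. rewrite E_up. f_equal. f_equal. lia. }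
  assert (W2 : forall k, E t (-1 * (n + Z.of_nat (S (S k)))) = / z * w1 k).
  { intros k. unfold w1. rewrite E_down. f_equal. f_equal. lia. }
  assert (F1 : csum (fun k => fst (Sbar q r n v) k * E t (-1 * (n + Z.of_nat k))) (S (S L))
              = z * SA + q n * (z * SB - / z * SB)).
  { transitivity (csum (fun k => A k * E t (-1 * (n + Z.of_nat k)) + q n * (B k * E t (-1 * (n + Z.of_nat k)) - shift2 B k * E t (-1 * (n + Z.of_nat k)))) (S (S L))).
    apply csum_ext; intros; unfold Sbar; simpl; fold A B; ring.
    rewrite csum_plus, csum_scal, csum_minus, !csum_shift2.
    rewrite (csum_extend (fun k => B k * _) L (S (S L))) by (try lia; intros k Hk; unfold B; rewrite (proj2 (Hs k Hk)); ring).
    rewrite (csum_extend (fun k => A k * _) L (S (S L))) by (try lia; intros k Hk; unfold A; rewrite (proj1 (Hs k Hk)); ring).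
    unfold SA, SB. rewrite <- !csum_scal. f_equal. apply csum_ext; intros; rewrite W0; ring.
    f_equal. f_equal; apply csum_ext; intros; rewrite ?W2, ?W0; ring. }
  assert (F2 : csum (fun k => snd (Sbar q r n v) k * E t (-1 * (n + Z.of_nat k))) (S (S L))
              = / z * SB + r n * (z * SA + q n * (z * SB - / z * SB))).
  { rewrite <- F1.
    transitivity (csum (fun k => shift2 B k * E t (-1 * (n + Z.of_nat k)) + r n * (fst (Sbar q r n v) k * E t (-1 * (n + Z.of_nat k)))) (S (S L))).
    apply csum_ext; intros; unfold Sbar; simpl; fold A B; ring.
    rewrite csum_plus, csum_scal, csum_shift2. f_equal.
    unfold SB. rewrite <- csum_scal. apply csum_ext; intros; rewrite W2; ring. }
  unfold evg, Qstep, comp1, comp2. cbn [fst snd]. rewrite F1, F2.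
  change (csum (fun k => fst v k * E t (-1 * (n + 1 + Z.of_nat k))) L) with SA.
  change (csum (fun k => snd v k * E t (-1 * (n + 1 + Z.of_nat k))) L) with SB.
  f_equal; field; auto. Qed.

Lemma evg_diff1 σ v v' L L' n t : supp v L -> (L <= L')%nat ->
  (Cmod (fst (evg σ v' L' n t) - fst (evg σ v L n t)) <= nu L' (ssub (fst v') (fst v)))%R.
Proof. intros Hs HL. unfold evg; cbn [fst snd].
  rewrite <- (csum_extend (fun k => fst v k * _) L L') by (auto; intros k Hk; rewrite (proj1 (Hs k Hk)); ring).
  rewrite <- csum_minus. eapply Rle_trans. apply Cmod_csum. unfold nu, ssub. right. apply rsum_ext.
  intros. replace (fst v' k * _ - _) with ((fst v' k - fst v k) * E t (σ * (n + Z.of_nat k))) by ring. rewrite Cmod_mult, Cmod_E. ring. Qed.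

Lemma evg_diff2 σ v v' L L' n t : supp v L -> (L <= L')%nat ->
  (Cmod (snd (evg σ v' L' n t) - snd (evg σ v L n t)) <= nu L' (ssub (snd v') (snd v)))%R.
Proof. intros Hs HL. unfold evg; cbn [fst snd].
  rewrite <- (csum_extend (fun k => snd v k * _) L L') by (auto; intros k Hk; rewrite (proj2 (Hs k Hk)); ring).
  rewrite <- csum_minus. eapply Rle_trans. apply Cmod_csum. unfold nu, ssub. right. apply rsum_ext.
  intros. replace (snd v' k * _ - _) with ((snd v' k - snd v k) * E t (σ * (n + Z.of_nat k))) by ring. rewrite Cmod_mult, Cmod_E. ring. Qed.


Open Scope C_scope.

Definition good (St : Z -> V -> V) (b : V) (G : Z -> R) : Prop :=
  (forall k, (1 <= G k)%R) /\
  (forall n J u v, (nuV J (vsub (St n u) (St n v)) <= G n * nuV J (vsub u v))%R) /\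
  (forall n J, (nuV J (vsub (St n b) b) <= G n - 1)%R) /\ decayG G /\
  (forall n v L, supp v L -> supp (St n v) (S (S L))) /\ supp b 1.

Definition tends0 (δ : nat -> R) : Prop :=
  forall eps, (0 < eps)%R -> exists M, forall m, (M <= m)%nat -> (δ m < eps)%R.

Lemma good_cauchy St b G : good St b G -> forall n, exists δ M0, tends0 δ /\
  forall m p J, (M0 <= m)%nat -> (nuV J (vsub (it St b (m + p) n) (it St b m n)) <= δ m)%R.
Proof. intros (HG & HN & HB & Hd & _ & _) n.
  destruct (gen_cauchy St b G HG HN HB Hd n) as [C0 [M0 [HC0 [Hn2 H]]]].
  exists (fun m => C0 * T5 (n + Z.of_nat m))%R, M0. split; auto.
  intros eps He. destruct (T5_lim (eps / C0)%R) as [N [HN2 HN']]. apply Rdiv_lt_0_compat; auto.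
  exists (Z.to_nat (N - n)). intros m Hm. specialize (HN' (n + Z.of_nat m)%Z ltac:(lia)).
  apply (Rmult_lt_compat_l C0) in HN'; auto. replace (C0 * (eps / C0))%R with eps in HN' by (field; lra). auto. Qed.

Lemma good_asym St b G : good St b G -> exists N1, (2 <= N1)%Z /\
  forall n m J, (N1 <= n)%Z -> (nuV J (vsub (it St b m n) b) <= exp 5 * T5 n)%R.
Proof. intros (HG & HN & HB & Hd & _ & _). apply (gen_asym St b G); auto. Qed.

Lemma good_supp St b G : good St b G -> forall m n, supp (it St b m n) (2 * m + 1).
Proof. intros (_ & _ & _ & _ & Hs & Hb). apply it_supp; auto. Qed.

Lemma nu_coef J (X Y : Seq) k : (k < J)%nat -> (Cmod (X k - Y k) <= nu J (ssub X Y))%R.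
Proof. intros Hk. unfold nu, ssub. induction J. lia. simpl.
  destruct (Nat.eq_dec k J). subst. pose proof (rsum_nonneg (fun k => Cmod (X k - Y k)) J ltac:(intros; apply Cmod_ge_0)). lra.
  pose proof (IHJ ltac:(lia)). pose proof (Cmod_ge_0 (X J - Y J)). lra. Qed.

Lemma nu_csum J (X Y : Seq) : (Cmod (csum X J - csum Y J) <= nu J (ssub X Y))%R.
Proof. rewrite <- csum_minus. apply Cmod_csum. Qed.

Lemma nuV_fst J v : (nu J (fst v) <= nuV J v)%R.
Proof. unfold nuV. pose proof (nu_nonneg J (snd v)). lra. Qed.
Lemma nuV_snd J v : (nu J (snd v) <= nuV J v)%R.
Proof. unfold nuV. pose proof (nu_nonneg J (fst v)). lra. Qed.

Definition ev σ St b m n t := evg σ (it St b m n) (2 * m + 1) n t.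
Definition Phi σ St b n t : vec2 :=
  (clim (fun m => fst (ev σ St b m n t)), clim (fun m => snd (ev σ St b m n t))).
Definition coefL St b n k : vec2 :=
  (clim (fun m => fst (it St b m n) k), clim (fun m => snd (it St b m n) k)).

Lemma Phi_unif σ St b G : good St b G -> forall n, exists δ M0, tends0 δ /\
  forall m t, (M0 <= m)%nat -> (Cmod (fst (ev σ St b m n t) - fst (Phi σ St b n t)) <= δ m)%R /\
      (Cmod (snd (ev σ St b m n t) - snd (Phi σ St b n t)) <= δ m)%R.
Proof. intros Hg n. destruct (good_cauchy St b G Hg n) as [δ [M0 [Hδ H]]].
  exists δ, M0. split; auto. intros m t Hm. assert (Hs := good_supp St b G Hg). split.
  - apply (clim_exists2 (fun m => fst (ev σ St b m n t)) δ M0); auto.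
    intros m' p Hm'. unfold ev. eapply Rle_trans. apply evg_diff1. apply Hs. lia.
    eapply Rle_trans. apply (nuV_fst _ (vsub _ _)). apply H; auto.
  - apply (clim_exists2 (fun m => snd (ev σ St b m n t)) δ M0); auto.
    intros m' p Hm'. unfold ev. eapply Rle_trans. apply evg_diff2. apply Hs. lia.
    eapply Rle_trans. apply (nuV_snd _ (vsub _ _)). apply H; auto. Qed.

Lemma Phi_lim σ St b G : good St b G -> forall n t,
  clim_to (fun m => fst (ev σ St b m n t)) (fst (Phi σ St b n t)) /\
  clim_to (fun m => snd (ev σ St b m n t)) (snd (Phi σ St b n t)).
Proof. intros Hg n t. destruct (Phi_unif σ St b G Hg n) as [δ [M0 [Hδ H]]].
  split; intros eps He; destruct (Hδ eps He) as [M HM]; exists (max M M0); intros m Hm;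
  (eapply Rle_lt_trans; [apply (H m t ltac:(lia))| apply HM; lia]). Qed.

Lemma coef_lim St b G : good St b G -> forall n k,
  clim_to (fun m => fst (it St b m n) k) (fst (coefL St b n k)) /\
  clim_to (fun m => snd (it St b m n) k) (snd (coefL St b n k)).
Proof. intros Hg n k. destruct (good_cauchy St b G Hg n) as [δ [M0 [Hδ H]]]. split.
  - apply (clim_exists (fun m => fst (it St b m n) k) δ M0); auto. intros m p Hm.
    eapply Rle_trans. apply (nu_coef (S k)); auto. eapply Rle_trans. apply (nuV_fst _ (vsub _ _)). apply H; auto.
  - apply (clim_exists (fun m => snd (it St b m n) k) δ M0); auto. intros m p Hm.
    eapply Rle_trans. apply (nu_coef (S k)); auto. eapply Rle_trans. apply (nuV_snd _ (vsub _ _)). apply H; auto. Qed.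

Lemma Qstep_lim q r n z u L : clim_to (fun m => fst (u m)) (fst L) -> clim_to (fun m => snd (u m)) (snd L) ->
  clim_to (fun m => fst (Qstep q r n z (u m))) (fst (Qstep q r n z L)) /\
  clim_to (fun m => snd (Qstep q r n z (u m))) (snd (Qstep q r n z L)).
Proof. intros H1 H2. unfold Qstep, comp1, comp2; cbn [fst snd]. split.
  - apply clim_plus. apply clim_scal; auto. apply clim_scal; auto.
  - apply clim_plus. apply clim_scal; auto. apply clim_scal; auto. Qed.

Lemma Phi_rec σ St b G q r : good St b G ->
  (forall v L n t, supp v L -> evg σ (St n v) (S (S L)) n t = Qstep q r n (eit t) (evg σ v L (n + 1) t)) ->
  forall n t, Phi σ St b n t = Qstep q r n (eit t) (Phi σ St b (n + 1) t).
Proof. intros Hg Hst n t. assert (Hs := good_supp St b G Hg).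
  assert (Heq : forall m, ev σ St b (S m) n t = Qstep q r n (eit t) (ev σ St b m (n + 1) t)).
  { intros m. unfold ev. simpl it. replace (2 * S m + 1)%nat with (S (S (2 * m + 1))) by lia. apply Hst. apply Hs. }
  destruct (Phi_lim σ St b G Hg n t) as [A1 A2]. destruct (Phi_lim σ St b G Hg (n+1) t) as [B1 B2].
  destruct (Qstep_lim q r n (eit t) _ _ B1 B2) as [C1 C2].
  apply clim_shift in A1. apply clim_shift in A2.
  destruct (Phi σ St b n t) as [p1 p2] eqn:Ep. simpl in A1, A2.
  destruct (Qstep q r n (eit t) (Phi σ St b (n + 1) t)) as [s1 s2] eqn:Es. simpl in C1, C2.
  f_equal.
  - apply (clim_unique (fun m => fst (ev σ St b (S m) n t))); auto. eapply clim_ext; [|apply C1]. exists O; intros; rewrite Heq; auto.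
  - apply (clim_unique (fun m => snd (ev σ St b (S m) n t))); auto. eapply clim_ext; [|apply C2]. exists O; intros; rewrite Heq; auto. Qed.

Lemma Phi_asym σ St b G : good St b G -> exists N1, (2 <= N1)%Z /\ forall n t, (N1 <= n)%Z ->
  (Cmod (fst (Phi σ St b n t) - fst (evg σ b 1 n t)) <= exp 5 * T5 n)%R /\
  (Cmod (snd (Phi σ St b n t) - snd (evg σ b 1 n t)) <= exp 5 * T5 n)%R.
Proof. intros Hg. destruct (good_asym St b G Hg) as [N1 [H2 H]]. exists N1. split; auto. intros n t Hn.
  assert (Hs := good_supp St b G Hg). destruct (Phi_lim σ St b G Hg n t) as [A1 A2]. split.
  - apply (clim_bound _ _ _ _ O A1). intros m _. unfold ev. eapply Rle_trans. apply evg_diff1.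
    apply (Hs O n). lia. eapply Rle_trans. apply (nuV_fst _ (vsub _ _)). simpl it. apply H; auto.
  - apply (clim_bound _ _ _ _ O A2). intros m _. unfold ev. eapply Rle_trans. apply evg_diff2.
    apply (Hs O n). lia. eapply Rle_trans. apply (nuV_snd _ (vsub _ _)). simpl it. apply H; auto. Qed.


Open Scope C_scope.
Local Open Scope R_scope.

Lemma sin_2kpi (s : Z) : sin (IZR s * (2 * PI)) = 0%R.
Proof. apply sin_eq_0_1. exists (2 * s)%Z. rewrite mult_IZR. ring. Qed.

Lemma cos_2kpi (s : Z) : cos (IZR s * (2 * PI)) = 1%R.
Proof. replace (IZR s * (2 * PI))%R with (2 * (IZR s * PI))%R by ring. rewrite cos_2a_sin.
  rewrite sin_eq_0_1. ring. exists s; auto. Qed.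

Lemma int_cos (s : Z) : s <> 0%Z -> is_RInt (fun t => cos (IZR s * t)) 0 (2 * PI) 0%R.
Proof. intros Hs. assert (IZR s <> 0%R) by (apply not_0_IZR; auto).
  assert (Hd : is_RInt (fun t => cos (IZR s * t)) 0 (2*PI) (minus (sin (IZR s * (2*PI)) / IZR s) (sin (IZR s * 0) / IZR s))%R).
  { apply (is_RInt_derive (fun t => sin (IZR s * t) / IZR s)%R).
    intros x _. auto_derive. auto. field; auto.
    intros x _. apply continuous_cos_comp. apply (continuous_mult (fun _ => IZR s) (fun x => x)). apply continuous_const. apply continuous_id. }
  assert (Hv : minus (sin (IZR s * (2*PI)) / IZR s) (sin (IZR s * 0) / IZR s)%R = 0%R).
  { unfold minus, plus, opp; simpl. rewrite sin_2kpi, Rmult_0_r, sin_0. field; auto. }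
  rewrite Hv in Hd. exact Hd. Qed.

Lemma int_sin (s : Z) : s <> 0%Z -> is_RInt (fun t => sin (IZR s * t)) 0 (2 * PI) 0%R.
Proof. intros Hs. assert (IZR s <> 0%R) by (apply not_0_IZR; auto).
  assert (Hd : is_RInt (fun t => sin (IZR s * t)) 0 (2*PI) (minus (- cos (IZR s * (2*PI)) / IZR s) (- cos (IZR s * 0) / IZR s))%R).
  { apply (is_RInt_derive (fun t => - cos (IZR s * t) / IZR s)%R).
    intros x _. auto_derive. auto. field; auto.
    intros x _. apply continuous_sin_comp. apply (continuous_mult (fun _ => IZR s) (fun x => x)). apply continuous_const. apply continuous_id. }
  assert (Hv : minus (- cos (IZR s * (2*PI)) / IZR s) (- cos (IZR s * 0) / IZR s)%R = 0%R).
  { unfold minus, plus, opp; simpl. rewrite cos_2kpi, Rmult_0_r, cos_0. field; auto. }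
  rewrite Hv in Hd. exact Hd. Qed.
Local Open Scope C_scope.

Lemma plus_C (x y : C) : @plus C_R_NormedModule x y = x + y.
Proof. reflexivity. Qed.

Lemma is_RInt_C_pair (f : R -> C) a b (l1 l2 : R) :
  is_RInt (fun t => fst (f t)) a b l1 -> is_RInt (fun t => snd (f t)) a b l2 ->
  is_RInt (V := C_R_NormedModule) f a b (l1, l2).
Proof. intros H1 H2. apply (is_RInt_fct_extend_pair (U := R_NormedModule) (V := R_NormedModule)); auto. Qed.

Lemma is_RInt_C_fst (f : R -> C) a b (l : C) :
  is_RInt (V := C_R_NormedModule) f a b l -> is_RInt (fun t => fst (f t)) a b (fst l).
Proof. intros H. apply (is_RInt_fct_extend_fst (U := R_NormedModule) (V := R_NormedModule)); auto. Qed.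

Lemma is_RInt_C_snd (f : R -> C) a b (l : C) :
  is_RInt (V := C_R_NormedModule) f a b l -> is_RInt (fun t => snd (f t)) a b (snd l).
Proof. intros H. apply (is_RInt_fct_extend_snd (U := R_NormedModule) (V := R_NormedModule)); auto. Qed.

Lemma int_eit (s : Z) : is_RInt (V := C_R_NormedModule) (fun t => eit (IZR s * t)) 0 (2 * PI)
  ((if Z.eq_dec s 0 then 2 * PI else 0)%R, 0%R).
Proof. apply is_RInt_C_pair; unfold eit; simpl. destruct (Z.eq_dec s 0).
  - subst. assert (Hc := is_RInt_const 0 (2*PI) (1%R : R_NormedModule)).
    assert (Hv : scal (2 * PI - 0)%R (1%R : R_NormedModule) = (2 * PI)%R) by (unfold scal; simpl; unfold mult; simpl; ring).
    rewrite Hv in Hc. eapply is_RInt_ext. 2: apply Hc. intros x _. simpl. rewrite Rmult_0_l, cos_0. reflexivity.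
  - apply int_cos; auto.
  - destruct (Z.eq_dec s 0).
    + subst. assert (Hc := is_RInt_const 0 (2*PI) (0%R : R_NormedModule)).
      assert (Hv : scal (2 * PI - 0)%R (0%R : R_NormedModule) = 0%R) by (unfold scal; simpl; unfold mult; simpl; ring).
      rewrite Hv in Hc. eapply is_RInt_ext. 2: apply Hc. intros x _. simpl. rewrite Rmult_0_l, sin_0. reflexivity.
    + apply int_sin; auto.
Qed.

Lemma is_RInt_lin2 (g h : R -> R) a b (al be Ig Ih : R) :
  is_RInt g a b Ig -> is_RInt h a b Ih -> is_RInt (fun t => al * g t + be * h t)%R a b (al * Ig + be * Ih)%R.
Proof. intros H1 H2. apply (is_RInt_plus (V := R_NormedModule)); apply (is_RInt_scal (V := R_NormedModule)); auto. Qed.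

Lemma is_RInt_Cmul (c : C) (f : R -> C) a b (l : C) :
  is_RInt (V := C_R_NormedModule) f a b l -> is_RInt (V := C_R_NormedModule) (fun t => c * f t) a b (c * l).
Proof. intros H. destruct c as [c1 c2]. destruct l as [l1 l2].
  assert (H1 := is_RInt_C_fst f a b _ H). assert (H2 := is_RInt_C_snd f a b _ H). simpl in H1, H2.
  change ((c1, c2) * (l1, l2)) with ((c1 * l1 - c2 * l2)%R, (c1 * l2 + c2 * l1)%R).
  apply is_RInt_C_pair.
  - eapply is_RInt_ext. 2: { replace (c1 * l1 - c2 * l2)%R with (c1 * l1 + (- c2) * l2)%R by ring. apply is_RInt_lin2; eauto. }
    intros x _. simpl. ring.
  - eapply is_RInt_ext. 2: { replace (c1 * l2 + c2 * l1)%R with (c1 * l2 + c2 * l1)%R by ring. apply is_RInt_lin2; eauto. }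
    intros x _. simpl. ring. Qed.

Lemma is_RInt_Cplus (f g : R -> C) a b (l l' : C) :
  is_RInt (V := C_R_NormedModule) f a b l -> is_RInt (V := C_R_NormedModule) g a b l' ->
  is_RInt (V := C_R_NormedModule) (fun t => f t + g t) a b (l + l').
Proof. intros H1 H2. apply (is_RInt_plus (V := C_R_NormedModule)); auto. Qed.

Lemma is_RInt_csum (F : nat -> R -> C) (I : nat -> C) a b J :
  (forall k, (k < J)%nat -> is_RInt (V := C_R_NormedModule) (F k) a b (I k)) ->
  is_RInt (V := C_R_NormedModule) (fun t => csum (fun k => F k t) J) a b (csum I J).
Proof. induction J; intros H; simpl.
  - assert (Hc := is_RInt_const (V := C_R_NormedModule) a b (RtoC 0)).
    assert (Hv : scal (b - a)%R (RtoC 0 : C_R_NormedModule) = RtoC 0) by (apply Ceq; unfold scal; simpl; unfold prod_scal; simpl; unfold scal; simpl; unfold mult; simpl; ring).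
    rewrite Hv in Hc. exact Hc.
  - apply is_RInt_Cplus. apply IHJ; intros; apply H; lia. apply H; lia. Qed.


Open Scope C_scope.

Lemma Rball_of (x y : R) (eps : R) : (Rabs (y - x) < eps)%R -> @ball R_UniformSpace x eps y.
Proof. intros H. unfold ball; simpl. unfold AbsRing_ball; simpl. unfold abs, minus, plus, opp; simpl. auto. Qed.

Lemma Rball_to (x y : R) (eps : R) : @ball R_UniformSpace x eps y -> (Rabs (y - x) < eps)%R.
Proof. unfold ball; simpl. unfold AbsRing_ball; simpl. unfold abs, minus, plus, opp; simpl. auto. Qed.

Lemma fct_ball_of (g h : R -> C) (eps : posreal) : (forall t, Cmod (h t - g t) < eps)%R ->
  @ball (fct_UniformSpace R C_R_CompleteNormedModule) g eps h.
Proof. intros H t. split; apply Rball_of.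
  - eapply Rle_lt_trans. 2: apply (H t). apply (fst_le_Cmod (h t - g t)).
  - eapply Rle_lt_trans. 2: apply (H t). apply (snd_le_Cmod (h t - g t)). Qed.

Lemma filterlim_clim (h : nat -> C) (If : C) :
  filterlim (U := C_R_CompleteNormedModule) h eventually (locally If) -> clim_to h If.
Proof. intros H eps He. assert (Hl : locally (T := C_R_CompleteNormedModule) If (fun y => ball (M := C_R_CompleteNormedModule) If (eps/2) y)).
  { exists (mkposreal (eps/2) ltac:(lra)). auto. }
  destruct (H _ Hl) as [M HM]. exists M. intros m Hm. specialize (HM m Hm). destruct HM as [H1 H2].
  apply Rball_to in H1. apply Rball_to in H2. eapply Rle_lt_trans. apply Cmod_le_sum. simpl.
  unfold Rminus in *. apply (Rlt_le_trans _ (eps/2 + eps/2)). apply Rplus_lt_compat; [exact H1|exact H2]. lra. Qed.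

Lemma unif_filterlim (f : nat -> R -> C) (g : R -> C) (δ : nat -> R) M0 :
  tends0 δ -> (forall m t, (M0 <= m)%nat -> (Cmod (f m t - g t) <= δ m)%R) ->
  filterlim f eventually (locally (T := fct_UniformSpace R C_R_CompleteNormedModule) g).
Proof. intros Hδ H P [eps HP]. destruct (Hδ eps (cond_pos eps)) as [M HM].
  exists (max M M0). intros m Hm. apply HP. apply fct_ball_of. intros t.
  eapply Rle_lt_trans. apply H; lia. apply HM; lia. Qed.

Lemma csum_single (a : nat -> C) k0 J :
  csum (fun k => if Nat.eq_dec k k0 then a k else 0) J = if Nat.ltb k0 J then a k0 else 0.
Proof. induction J; simpl. auto. rewrite IHJ. destruct (Nat.eq_dec J k0).
  - subst. destruct (Nat.ltb k0 k0) eqn:E1; [apply Nat.ltb_lt in E1; lia|].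
    destruct (Nat.ltb k0 (S k0)) eqn:E2; [|apply Nat.ltb_ge in E2; lia]. ring.
  - destruct (Nat.ltb k0 J) eqn:E1; destruct (Nat.ltb k0 (S J)) eqn:E2; try ring.
    apply Nat.ltb_lt in E1; apply Nat.ltb_ge in E2; lia.
    apply Nat.ltb_ge in E1; apply Nat.ltb_lt in E2; lia. Qed.

Lemma fourier_fin (X : Seq) J (σ : Z) n e k0 :
  (forall k, (J <= k)%nat -> X k = 0) ->
  (forall k : nat, (σ * (n + Z.of_nat k) + e + 1)%Z = 0%Z <-> k = k0) ->
  is_RInt (V := C_R_NormedModule)
    (fun t => csum (fun k => X k * E t (σ * (n + Z.of_nat k))) J * zpow (eit t) e * (Ci * eit t)) 0 (2 * PI)
    (twopii * X k0).
Proof. intros Hs Hk.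
  assert (Hv : csum (fun k => (X k * Ci) * ((if Z.eq_dec (σ * (n + Z.of_nat k) + e + 1) 0 then 2 * PI else 0)%R, 0%R)) J = twopii * X k0).
  { rewrite (csum_ext _ (fun k => if Nat.eq_dec k k0 then twopii * X k else 0)).
    + rewrite csum_single. destruct (Nat.ltb k0 J) eqn:E1; auto. apply Nat.ltb_ge in E1. rewrite Hs; auto. ring.
    + intros k _. destruct (Nat.eq_dec k k0) as [E1|E1]; destruct (Z.eq_dec (σ * (n + Z.of_nat k) + e + 1) 0) as [E2|E2].
      * subst. unfold twopii. apply Ceq; simpl; ring.
      * exfalso. apply E2. apply Hk. auto.
      * exfalso. apply E1. apply Hk. auto.
      * apply Ceq; simpl; ring. }
  rewrite <- Hv. eapply is_RInt_ext.
  2: apply (is_RInt_csum (fun k t => (X k * Ci) * eit (IZR (σ * (n + Z.of_nat k) + e + 1) * t))).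
  - intros t _. symmetry. match goal with |- ?a = ?b => change (@eq C a b) end. transitivity (csum (fun k => (zpow (eit t) e * (Ci * eit t)) * (X k * E t (σ * (n + Z.of_nat k)))) J). rewrite csum_scal; ring. apply csum_ext. intros k _.
    unfold E. rewrite zpow_eit. 
    replace (IZR (σ * (n + Z.of_nat k) + e + 1) * t)%R with (IZR (σ * (n + Z.of_nat k)) * t + IZR e * t + t)%R
      by (rewrite !plus_IZR; ring).
    rewrite <- !eit_add. ring.
  - intros k _. apply is_RInt_Cmul. apply int_eit.
Qed.

Lemma twopii_neq0 : twopii <> 0.
Proof. unfold twopii. intro H. apply (f_equal snd) in H. simpl in H. pose proof PI_RGT_0. nra. Qed.

Lemma K_ident_gen σ St b G (psi : Z -> C -> vec2) n e k0
  (Hg : good St b G) (Hid : forall t, psi n (eit t) = Phi σ St b n t)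
  (Hk : forall k : nat, (σ * (n + Z.of_nat k) + e + 1)%Z = 0%Z <-> k = k0) :
  / twopii * circ_int (fun z => comp1 (psi n z) * zpow z e) = fst (coefL St b n k0) /\
  / twopii * circ_int (fun z => comp2 (psi n z) * zpow z e) = snd (coefL St b n k0).
Proof. destruct (Phi_unif σ St b G Hg n) as [δ [M0 [Hδ Hu]]].
  assert (Hs := good_supp St b G Hg).
  destruct (coef_lim St b G Hg n k0) as [Hc1 Hc2].
  assert (Hgen : forall (proj : vec2 -> C) (projs : V -> Seq),
     (forall m t, proj (ev σ St b m n t) = csum (fun k => projs (it St b m n) k * E t (σ * (n + Z.of_nat k))) (2 * m + 1)) ->
     (forall m, forall k, (2 * m + 1 <= k)%nat -> projs (it St b m n) k = 0) ->
     (forall m t, (M0 <= m)%nat -> (Cmod (proj (ev σ St b m n t) - proj (Phi σ St b n t)) <= δ m)%R) ->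
     forall L, clim_to (fun m => projs (it St b m n) k0) L ->
     / twopii * circ_int (fun z => proj (psi n z) * zpow z e) = L).
  { intros proj projs Hp Hsp Hb L HL.
    set (g := fun t => proj (psi n (eit t)) * zpow (eit t) e * (Ci * eit t)).
    set (f := fun m t => proj (ev σ St b m n t) * zpow (eit t) e * (Ci * eit t)).
    assert (Hf : forall m, is_RInt (V := C_R_CompleteNormedModule) (f m) 0 (2 * PI) (twopii * projs (it St b m n) k0)).
    { intros m. eapply is_RInt_ext. 2: apply (fourier_fin _ (2 * m + 1) σ n e k0); auto.
      intros t _. unfold f. rewrite Hp. reflexivity. }
    assert (Hfl : filterlim f eventually (locally (T := fct_UniformSpace R C_R_CompleteNormedModule) g)).
    { apply (unif_filterlim f g δ M0 Hδ). intros m t Hm. unfold f, g. rewrite Hid.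
      replace (proj (ev σ St b m n t) * zpow (eit t) e * (Ci * eit t) - proj (Phi σ St b n t) * zpow (eit t) e * (Ci * eit t))
        with ((proj (ev σ St b m n t) - proj (Phi σ St b n t)) * (zpow (eit t) e * (Ci * eit t))) by ring.
      rewrite Cmod_mult, Cmod_mult, Cmod_mult, Cmod_Ci, Cmod_eit, Cmod_zpow by apply Cmod_eit. rewrite !Rmult_1_r. apply Hb; auto. }
    destruct (filterlim_RInt (V := C_R_CompleteNormedModule) f 0 (2 * PI) eventually eventually_filter g _ Hf Hfl) as [If [HIf1 HIf2]].
    assert (HR : circ_int (fun z => proj (psi n z) * zpow z e) = If).
    { unfold circ_int. exact (is_RInt_unique (V := C_R_CompleteNormedModule) _ _ _ _ HIf2). }
    rewrite HR.
    apply filterlim_clim in HIf1. assert (H2 := clim_scal twopii _ _ HL).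
    rewrite (clim_unique _ _ _ HIf1 H2). field. apply twopii_neq0. }
  split.
  - apply (Hgen comp1 fst); auto. intros m k Hk'; apply (Hs m n k Hk').
    intros m t Hm; apply (Hu m t Hm).
  - apply (Hgen comp2 snd); auto. intros m k Hk'; apply (Hs m n k Hk').
    intros m t Hm; apply (Hu m t Hm). Qed.


Open Scope C_scope.

Definition Wr (u v : vec2) : C := comp1 u * comp2 v - comp2 u * comp1 v.

Lemma Wr_step q r n (z : C) u v : z <> 0 -> Wr (Qstep q r n z u) (Qstep q r n z v) = Wr u v.
Proof. intros Hz. unfold Wr, Qstep, comp1, comp2; simpl. field; auto. Qed.

Lemma const_lim (a : Z -> C) L : (forall n, a n = a (n + 1)%Z) -> cv_pinf a L -> forall n, a n = L.
Proof. intros Ha HL n. assert (Hm : forall m : nat, a n = a (n + Z.of_nat m)%Z).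
  { induction m. f_equal; lia. rewrite IHm, Ha. f_equal; lia. }
  cut (a n - L = 0). { intros H. replace (a n) with (a n - L + L) by ring. rewrite H; ring. }
  apply small_zero. intros eps He. destruct (HL eps He) as [N HN].
  rewrite (Hm (Z.to_nat (N - n))). apply HN. lia. Qed.

Lemma cv_plus a b A B : cv_pinf a A -> cv_pinf b B -> cv_pinf (fun n => a n + b n) (A + B).
Proof. intros H1 H2 eps He. destruct (H1 (eps/2)%R ltac:(lra)) as [N1 HN1]. destruct (H2 (eps/2)%R ltac:(lra)) as [N2 HN2].
  exists (Z.max N1 N2). intros n Hn. specialize (HN1 n ltac:(lia)). specialize (HN2 n ltac:(lia)).
  replace (a n + b n - (A + B)) with ((a n - A) + (b n - B)) by ring.
  eapply Rle_lt_trans. apply Cmod_triangle. lra. Qed.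

Lemma cv_mult a b A B : cv_pinf a A -> cv_pinf b B -> cv_pinf (fun n => a n * b n) (A * B).
Proof. intros H1 H2 eps He.
  set (K := (Cmod A + Cmod B + 1)%R). pose proof (Cmod_ge_0 A). pose proof (Cmod_ge_0 B).
  set (e1 := Rmin 1 (eps / (2 * K))%R).
  assert (He1 : (0 < e1)%R). { unfold e1. apply Rmin_pos. lra. apply Rdiv_lt_0_compat; unfold K; lra. }
  destruct (H1 e1 He1) as [N1 HN1]. destruct (H2 e1 He1) as [N2 HN2].
  exists (Z.max N1 N2). intros n Hn. specialize (HN1 n ltac:(lia)). specialize (HN2 n ltac:(lia)).
  replace (a n * b n - A * B) with ((a n - A) * (b n - B) + (a n - A) * B + A * (b n - B)) by ring.
  eapply Rle_lt_trans. apply Cmod_triangle. eapply Rle_lt_trans. apply Rplus_le_compat_r. apply Cmod_triangle.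
  rewrite !Cmod_mult.
  assert (e1 <= 1)%R by apply Rmin_l. assert (e1 <= eps / (2 * K))%R by apply Rmin_r.
  pose proof (Cmod_ge_0 (a n - A)). pose proof (Cmod_ge_0 (b n - B)).
  assert (e1 * K <= eps / 2)%R. { apply (Rmult_le_compat_r K) in H4; [|unfold K; lra].
    replace (eps / (2 * K) * K)%R with (eps / 2)%R in H4 by (field; unfold K; lra). lra. }
  assert (Cmod (a n - A) * Cmod (b n - B) <= e1 * 1)%R by (apply Rmult_le_compat; lra).
  assert (Cmod (a n - A) * Cmod B <= e1 * Cmod B)%R by (apply Rmult_le_compat_r; lra).
  assert (Cmod A * Cmod (b n - B) <= Cmod A * e1)%R by (apply Rmult_le_compat_l; lra).
  unfold K in *. nra. Qed.

Lemma cv_opp a A : cv_pinf a A -> cv_pinf (fun n => - a n) (- A).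
Proof. intros H eps He. destruct (H eps He) as [N HN]. exists N. intros n Hn.
  replace (- a n - - A) with (- (a n - A)) by ring. rewrite Cmod_opp. auto. Qed.

Lemma cv_minus a b A B : cv_pinf a A -> cv_pinf b B -> cv_pinf (fun n => a n - b n) (A - B).
Proof. intros. apply cv_plus; auto. apply cv_opp; auto. Qed.

Lemma cv_ext a b A : (forall n, a n = b n) -> cv_pinf a A -> cv_pinf b A.
Proof. intros He H eps Hp. destruct (H eps Hp) as [N HN]. exists N. intros; rewrite <- He; auto. Qed.

Lemma cv0_unit a u : cv_pinf a 0 -> (forall n, Cmod (u n) = 1%R) -> cv_pinf (fun n => a n * u n) 0.
Proof. intros H Hu eps He. destruct (H eps He) as [N HN]. exists N. intros n Hn.
  specialize (HN n Hn). replace (a n * u n - 0) with ((a n - 0) * u n) by ring. rewrite Cmod_mult, Hu. lra. Qed.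

Lemma cv_of_bound a A (η : Z -> R) N1 : (forall n, (N1 <= n)%Z -> (Cmod (a n - A) <= η n)%R) ->
  (forall eps, (0 < eps)%R -> exists N, forall n, (N <= n)%Z -> (η n < eps)%R) -> cv_pinf a A.
Proof. intros H1 H2 eps He. destruct (H2 eps He) as [N HN]. exists (Z.max N N1). intros n Hn.
  eapply Rle_lt_trans. apply H1; lia. apply HN; lia. Qed.

Lemma cv_limeq a A B : cv_pinf a A -> A = B -> cv_pinf a B.
Proof. intros H E; subst; auto. Qed.

Section WL.
End WL.

Lemma W_PP (c d : Z -> C) (u v : Z -> vec2) :
  (forall n, c n * d n = 1) -> (forall n, Cmod (c n) = 1%R) -> (forall n, Cmod (d n) = 1%R) ->
  cv_pinf (fun n => comp1 (u n)) 0 -> cv_pinf (fun n => c n * comp2 (u n)) 1 ->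
  cv_pinf (fun n => comp1 (v n)) 0 -> cv_pinf (fun n => c n * comp2 (v n)) 1 ->
  cv_pinf (fun n => Wr (u n) (v n)) 0.
Proof. intros Hcd Hc Hd H1 H2 H3 H4.
  apply (cv_ext (fun n => (comp1 (u n) * d n) * (c n * comp2 (v n)) - (c n * comp2 (u n)) * (comp1 (v n) * d n))).
  { intros n. unfold Wr. transitivity (c n * d n * (comp1 (u n) * comp2 (v n) - comp2 (u n) * comp1 (v n))). ring. rewrite Hcd; ring. }
  eapply cv_limeq. apply cv_minus; apply cv_mult; eauto; apply cv0_unit; eauto. ring. Qed.

Lemma W_PB (c d : Z -> C) (u v : Z -> vec2) :
  (forall n, c n * d n = 1) -> (forall n, Cmod (c n) = 1%R) -> (forall n, Cmod (d n) = 1%R) ->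
  cv_pinf (fun n => comp1 (u n)) 0 -> cv_pinf (fun n => c n * comp2 (u n)) 1 ->
  cv_pinf (fun n => d n * comp1 (v n)) 1 -> cv_pinf (fun n => comp2 (v n)) 0 ->
  cv_pinf (fun n => Wr (u n) (v n)) (-1).
Proof. intros Hcd Hc Hd H1 H2 H3 H4.
  apply (cv_ext (fun n => comp1 (u n) * comp2 (v n) - (c n * comp2 (u n)) * (d n * comp1 (v n)))).
  { intros n. unfold Wr. transitivity (comp1 (u n) * comp2 (v n) - c n * d n * (comp2 (u n) * comp1 (v n))). ring. rewrite Hcd; ring. }
  eapply cv_limeq. apply cv_minus; apply cv_mult; eauto. ring. Qed.

Lemma W_BP (c d : Z -> C) (u v : Z -> vec2) :
  (forall n, c n * d n = 1) -> (forall n, Cmod (c n) = 1%R) -> (forall n, Cmod (d n) = 1%R) ->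
  cv_pinf (fun n => d n * comp1 (u n)) 1 -> cv_pinf (fun n => comp2 (u n)) 0 ->
  cv_pinf (fun n => comp1 (v n)) 0 -> cv_pinf (fun n => c n * comp2 (v n)) 1 ->
  cv_pinf (fun n => Wr (u n) (v n)) 1.
Proof. intros Hcd Hc Hd H1 H2 H3 H4.
  apply (cv_ext (fun n => (d n * comp1 (u n)) * (c n * comp2 (v n)) - comp2 (u n) * comp1 (v n))).
  { intros n. unfold Wr. transitivity (c n * d n * (comp1 (u n) * comp2 (v n)) - comp2 (u n) * comp1 (v n)). ring. rewrite Hcd; ring. }
  eapply cv_limeq. apply cv_minus; apply cv_mult; eauto. ring. Qed.

Lemma W_BB (c d : Z -> C) (u v : Z -> vec2) :
  (forall n, c n * d n = 1) -> (forall n, Cmod (c n) = 1%R) -> (forall n, Cmod (d n) = 1%R) ->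
  cv_pinf (fun n => d n * comp1 (u n)) 1 -> cv_pinf (fun n => comp2 (u n)) 0 ->
  cv_pinf (fun n => d n * comp1 (v n)) 1 -> cv_pinf (fun n => comp2 (v n)) 0 ->
  cv_pinf (fun n => Wr (u n) (v n)) 0.
Proof. intros Hcd Hc Hd H1 H2 H3 H4.
  apply (cv_ext (fun n => (d n * comp1 (u n)) * (comp2 (v n) * c n) - (comp2 (u n) * c n) * (d n * comp1 (v n)))).
  { intros n. unfold Wr. transitivity (c n * d n * (comp1 (u n) * comp2 (v n) - comp2 (u n) * comp1 (v n))). ring. rewrite Hcd; ring. }
  eapply cv_limeq. apply cv_minus; apply cv_mult; eauto; apply cv0_unit; eauto. ring. Qed.

Lemma vec_decomp (u v x : vec2) : Wr u v <> 0 ->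
  x = (/ Wr u v * (Wr x v * comp1 u + Wr u x * comp1 v), / Wr u v * (Wr x v * comp2 u + Wr u x * comp2 v)).
Proof. intros H. destruct x as [x1 x2]. unfold Wr, comp1, comp2 in *; simpl in *. f_equal; field; auto. Qed.


Open Scope C_scope.

Lemma good_psi q r : rapid_decay q -> rapid_decay r -> good (Spsi q r) bpsi (Gqr q r).
Proof. intros Hq Hr. refine (conj _ (conj _ (conj _ (conj _ (conj _ _))))).
  apply Gqr_ge1. apply Spsi_HN. apply Spsi_HB. apply decay_Gqr; auto.
  intros; apply Spsi_supp; auto. apply bpsi_supp. Qed.

Lemma good_bar q r : rapid_decay q -> rapid_decay r -> good (Sbar q r) bbar (Gqr q r).
Proof. intros Hq Hr. refine (conj _ (conj _ (conj _ (conj _ (conj _ _))))).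
  apply Gqr_ge1. apply Sbar_HN. apply Sbar_HB. apply decay_Gqr; auto.
  intros; apply Sbar_supp; auto. apply bbar_supp. Qed.

Definition PhiP q r := Phi 1 (Spsi q r) bpsi.
Definition PhiB q r := Phi (-1) (Sbar q r) bbar.

Lemma E_cd t n : E t (- n) * E t n = 1.
Proof. unfold E. rewrite eit_add, opp_IZR. replace (- IZR n * t + IZR n * t)%R with 0%R by ring. apply eit_0. Qed.

Lemma eta_lim : forall eps, (0 < eps)%R -> exists N, forall n, (N <= n)%Z -> (exp 5 * T5 n < eps)%R.
Proof. intros eps He. destruct (T5_lim (eps / exp 5)) as [N [_ HN]]. apply Rdiv_lt_0_compat; auto; apply exp_pos.
  exists N. intros n Hn. specialize (HN n Hn). pose proof (exp_pos 5).
  apply (Rmult_lt_compat_l (exp 5)) in HN; auto. replace (exp 5 * (eps / exp 5))%R with eps in HN by (field; lra). auto. Qed.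

Lemma pair_fst (a b : C) : fst (a, b) = a. Proof. reflexivity. Qed.
Lemma pair_snd (a b : C) : snd (a, b) = b. Proof. reflexivity. Qed.

Lemma evg_bpsi t n : evg 1 bpsi 1 n t = (RtoC 0, E t n).
Proof. unfold evg, bpsi, zseq, delta0. cbn [csum fst snd]. f_equal. ring.
  replace (1 * (n + Z.of_nat 0))%Z with n by lia. ring. Qed.

Lemma evg_bbar t n : evg (-1) bbar 1 n t = (E t (- n), RtoC 0).
Proof. unfold evg, bbar, zseq, delta0. cbn [csum fst snd]. f_equal.
  replace (-1 * (n + Z.of_nat 0))%Z with (- n)%Z by lia. ring. ring. Qed.

Lemma PhiP_cv q r t : rapid_decay q -> rapid_decay r ->
  cv_pinf (fun n => comp1 (PhiP q r n t)) 0 /\ cv_pinf (fun n => E t (- n) * comp2 (PhiP q r n t)) 1.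
Proof. intros Hq Hr. destruct (Phi_asym 1 _ _ _ (good_psi q r Hq Hr)) as [N1 [_ H]]. split.
  - apply (cv_of_bound _ _ (fun n => exp 5 * T5 n)%R N1); [|apply eta_lim].
    intros n Hn. destruct (H n t Hn) as [H1 _]. rewrite evg_bpsi in H1. rewrite pair_fst in H1.
    unfold PhiP, comp1. exact H1.
  - apply (cv_of_bound _ _ (fun n => exp 5 * T5 n)%R N1); [|apply eta_lim].
    intros n Hn. destruct (H n t Hn) as [_ H1]. rewrite evg_bpsi in H1. rewrite pair_snd in H1.
    unfold PhiP, comp2. eapply Rle_trans; [|apply H1]. right.
    rewrite <- (E_cd t n).
    replace (E t (- n) * snd (Phi 1 (Spsi q r) bpsi n t) - E t (- n) * E t n) with
      (E t (- n) * (snd (Phi 1 (Spsi q r) bpsi n t) - E t n)) by ring.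
    rewrite Cmod_mult, Cmod_E. ring. Qed.

Lemma PhiB_cv q r t : rapid_decay q -> rapid_decay r ->
  cv_pinf (fun n => E t n * comp1 (PhiB q r n t)) 1 /\ cv_pinf (fun n => comp2 (PhiB q r n t)) 0.
Proof. intros Hq Hr. destruct (Phi_asym (-1) _ _ _ (good_bar q r Hq Hr)) as [N1 [_ H]]. split.
  - apply (cv_of_bound _ _ (fun n => exp 5 * T5 n)%R N1); [|apply eta_lim].
    intros n Hn. destruct (H n t Hn) as [H1 _]. rewrite evg_bbar in H1. rewrite pair_fst in H1.
    unfold PhiB, comp1. eapply Rle_trans; [|apply H1]. right.
    rewrite <- (E_cd t n).
    replace (E t n * fst (Phi (-1) (Sbar q r) bbar n t) - E t (- n) * E t n) with
      (E t n * (fst (Phi (-1) (Sbar q r) bbar n t) - E t (- n))) by ring.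
    rewrite Cmod_mult, Cmod_E. ring.
  - apply (cv_of_bound _ _ (fun n => exp 5 * T5 n)%R N1); [|apply eta_lim].
    intros n Hn. destruct (H n t Hn) as [_ H1]. rewrite evg_bbar in H1. rewrite pair_snd in H1.
    unfold PhiB, comp2. exact H1. Qed.

Lemma PhiP_rec q r n t : rapid_decay q -> rapid_decay r -> PhiP q r n t = Qstep q r n (eit t) (PhiP q r (n + 1) t).
Proof. intros Hq Hr. apply (Phi_rec 1 _ _ _ q r (good_psi q r Hq Hr)). intros. apply evpsi_step; auto. Qed.

Lemma PhiB_rec q r n t : rapid_decay q -> rapid_decay r -> PhiB q r n t = Qstep q r n (eit t) (PhiB q r (n + 1) t).
Proof. intros Hq Hr. apply (Phi_rec (-1) _ _ _ q r (good_bar q r Hq Hr)). intros. apply evbar_step; auto. Qed.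

Lemma Wconst q r t (u v : Z -> vec2) :
  (forall n, u n = Qstep q r n (eit t) (u (n + 1)%Z)) -> (forall n, v n = Qstep q r n (eit t) (v (n + 1)%Z)) ->
  forall n, Wr (u n) (v n) = Wr (u (n + 1)%Z) (v (n + 1)%Z).
Proof. intros Hu Hv n. rewrite Hu, Hv. apply Wr_step. apply eit_neq0. Qed.

Lemma identify q r psi psib (hq : rapid_decay q) (hr : rapid_decay r)
  (hpsi : jost_psi q r psi) (hpsib : jost_psibar q r psib) :
  forall n t, psi n (eit t) = PhiP q r n t /\ psib n (eit t) = PhiB q r n t.
Proof. intros n t.
  assert (Hz : Cmod (eit t) = 1%R) by apply Cmod_eit.
  destruct (hpsi _ Hz) as [Sp [Hp1 Hp2]]. destruct (hpsib _ Hz) as [Sb [Hb1 Hb2]].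
  destruct (PhiP_cv q r t hq hr) as [P1 P2]. destruct (PhiB_cv q r t hq hr) as [B1 B2].
  set (c := fun n => E t (- n)). set (d := fun n => E t n).
  assert (Hcd : forall n, c n * d n = 1) by (intros; apply E_cd).
  assert (Hc : forall n, Cmod (c n) = 1%R) by (intros; apply Cmod_E).
  assert (Hd : forall n, Cmod (d n) = 1%R) by (intros; apply Cmod_E).
  assert (Hp2' : cv_pinf (fun n => c n * comp2 (psi n (eit t))) 1).
  { eapply cv_ext; [|apply Hp2]. intros m. simpl. rewrite zpow_eit. reflexivity. }
  assert (Hb1' : cv_pinf (fun n => d n * comp1 (psib n (eit t))) 1).
  { eapply cv_ext; [|apply Hb1]. intros m. simpl. rewrite zpow_eit. reflexivity. }
  assert (RP := fun n => PhiP_rec q r n t hq hr). assert (RB := fun n => PhiB_rec q r n t hq hr).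
  assert (W1 := const_lim _ _ (Wconst q r t _ _ Sp RP) (W_PP c d _ _ Hcd Hc Hd Hp1 Hp2' P1 P2)).
  assert (W2 := const_lim _ _ (Wconst q r t _ _ Sp RB) (W_PB c d _ _ Hcd Hc Hd Hp1 Hp2' B1 B2)).
  assert (W3 := const_lim _ _ (Wconst q r t _ _ RP RB) (W_PB c d _ _ Hcd Hc Hd P1 P2 B1 B2)).
  assert (W4 := const_lim _ _ (Wconst q r t _ _ Sb RP) (W_BP c d _ _ Hcd Hc Hd Hb1' Hb2 P1 P2)).
  assert (W5 := const_lim _ _ (Wconst q r t _ _ Sb RB) (W_BB c d _ _ Hcd Hc Hd Hb1' Hb2 B1 B2)).
  simpl in W1, W2, W3, W4, W5.
  assert (Hne : Wr (PhiP q r n t) (PhiB q r n t) <> 0). { rewrite W3. intro H. apply (f_equal fst) in H. simpl in H. lra. }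
  split.
  - rewrite (vec_decomp _ _ (psi n (eit t)) Hne).
    replace (Wr (PhiP q r n t) (psi n (eit t))) with (- Wr (psi n (eit t)) (PhiP q r n t)) by (unfold Wr; ring).
    rewrite W1, W2, W3. destruct (PhiP q r n t) as [a1 a2]. unfold comp1, comp2; simpl. f_equal; field.
  - rewrite (vec_decomp _ _ (psib n (eit t)) Hne).
    replace (Wr (PhiP q r n t) (psib n (eit t))) with (- Wr (psib n (eit t)) (PhiP q r n t)) by (unfold Wr; ring).
    rewrite W4, W5, W3. destruct (PhiB q r n t) as [a1 a2]. unfold comp1, comp2; simpl. f_equal; field. Qed.


Open Scope C_scope.

Lemma sum_n_csum (a : nat -> C) N : sum_n (G := C_R_NormedModule) a N = csum a (S N).
Proof. induction N. rewrite sum_O. simpl. apply Ceq; simpl; ring.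
  rewrite sum_Sn, IHN. reflexivity. Qed.

Lemma is_series_of (a : nat -> C) L : clim_to (fun N => csum a N) L ->
  is_series (K := R_AbsRing) (V := C_R_NormedModule) a L.
Proof. intros H P [eps HP]. destruct (H eps (cond_pos eps)) as [M HM].
  exists M. intros m Hm. apply HP. rewrite sum_n_csum. specialize (HM (S m) ltac:(lia)).
  split; apply Rball_of.
  - eapply Rle_lt_trans. 2: apply HM. apply (fst_le_Cmod (csum a (S m) - L)).
  - eapply Rle_lt_trans. 2: apply HM. apply (snd_le_Cmod (csum a (S m) - L)). Qed.

Lemma csum_lin (f g : nat -> C) al be K : csum (fun k => al * f k + be * g k) K = al * csum f K + be * csum g K.
Proof. rewrite csum_plus, !csum_scal. auto. Qed.

Lemma coef_series St b G (Hg : good St b G) n (pr : V -> Seq)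
  (Hpr : forall J v v', (nu J (ssub (pr v) (pr v')) <= nuV J (vsub v v'))%R)
  (Hsp : forall v L, supp v L -> forall k, (L <= k)%nat -> pr v k = 0)
  (L : nat -> C) (HL : forall k, clim_to (fun m => pr (it St b m n) k) (L k)) :
  exists Ls, clim_to (fun m => csum (pr (it St b m n)) (2 * m + 1)) Ls /\ clim_to (fun K => csum L K) Ls.
Proof. destruct (good_cauchy St b G Hg n) as [δ [M0 [Hδ H]]]. assert (Hs := good_supp St b G Hg).
  set (s := fun m => csum (pr (it St b m n)) (2 * m + 1)).
  assert (Hsc : forall m p, (M0 <= m)%nat -> (Cmod (s (m + p)%nat - s m) <= δ m)%R).
  { intros m p Hm. unfold s. rewrite <- (csum_extend (pr (it St b m n)) (2 * m + 1) (2 * (m + p) + 1)).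
    eapply Rle_trans. apply nu_csum. eapply Rle_trans. apply Hpr. apply H; auto. lia.
    intros k Hk. apply (Hsp _ _ (Hs m n)); auto. }
  destruct (clim_exists2 s δ M0 Hsc Hδ) as [Hs1 Hs2]. exists (clim s). split; auto.
  intros eps He. destruct (Hδ (eps / 3)%R ltac:(lra)) as [M HM].
  set (M1 := max M M0). exists (2 * M1 + 1)%nat. intros K HK.
  assert (HcK : clim_to (fun m => csum (pr (it St b m n)) K - s m) (csum L K - clim s)).
  { apply clim_minus; auto. apply clim_csum. intros; apply HL. }
  assert (Hb : forall m, (M1 <= m)%nat -> (Cmod (csum (pr (it St b m n)) K - s m - 0) <= 2 * δ M1)%R).
  { intros m Hm. replace m with (M1 + (m - M1))%nat by lia. set (p := (m - M1)%nat).
    assert (E1 : csum (pr (it St b M1 n)) K = s M1).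
    { unfold s. apply csum_extend. lia. intros k Hk. apply (Hsp _ _ (Hs M1 n)); auto. }
    replace (csum (pr (it St b (M1 + p) n)) K - s (M1 + p)%nat - 0) with
      ((csum (pr (it St b (M1 + p) n)) K - csum (pr (it St b M1 n)) K) - (s (M1 + p)%nat - s M1)) by (rewrite E1; ring).
    eapply Rle_trans. unfold Cminus at 1. apply Cmod_triangle. rewrite Cmod_opp.
    assert (Cmod (csum (pr (it St b (M1 + p) n)) K - csum (pr (it St b M1 n)) K) <= δ M1)%R.
    { eapply Rle_trans. apply nu_csum. eapply Rle_trans. apply Hpr. apply H. unfold M1; lia. }
    assert (Cmod (s (M1 + p)%nat - s M1) <= δ M1)%R by (apply Hsc; unfold M1; lia). lra. }
  assert (HH := clim_bound _ _ 0 _ M1 HcK Hb).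
  assert (δ M1 < eps / 3)%R by (apply HM; unfold M1; lia).
  replace (csum L K - clim s) with (csum L K - clim s - 0) by ring. lra. Qed.

Lemma csum_shift2' (X : Seq) J : csum (shift2 X) (S (S J)) = csum X J.
Proof. rewrite csum_shift, csum_shift. simpl. rewrite Cplus_0_l, Cplus_0_l. apply csum_ext; auto. Qed.

Lemma sums_psi q r : forall m n,
  csum (fst (it (Spsi q r) bpsi m n)) (2 * m + 1) = 0 /\ csum (snd (it (Spsi q r) bpsi m n)) (2 * m + 1) = 1.
Proof. induction m; intros n.
  - simpl. unfold zseq, delta0; split; ring.
  - destruct (IHm (n + 1)%Z) as [H1 H2]. set (v := it (Spsi q r) bpsi m (n + 1)) in *.
    assert (Hs : supp v (2 * m + 1)) by (apply it_supp; [intros; apply Spsi_supp; auto| apply bpsi_supp]).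
    replace (2 * S m + 1)%nat with (S (S (2 * m + 1))) by lia. simpl it. fold v.
    assert (HB : csum (snd v) (S (S (2 * m + 1))) = csum (snd v) (2 * m + 1)).
    { apply csum_extend. lia. intros k Hk. apply (proj2 (Hs k Hk)). }
    assert (F : csum (fst (Spsi q r n v)) (S (S (2 * m + 1))) = 0).
    { transitivity (csum (fun k => shift2 (fst v) k + q n * (shift2 (snd v) k - snd v k)) (S (S (2 * m + 1)))). reflexivity.
      rewrite csum_plus, csum_scal, csum_minus, !csum_shift2', HB, H1, H2. ring. }
    split; auto.
    transitivity (csum (fun k => snd v k + r n * fst (Spsi q r n v) k) (S (S (2 * m + 1)))). reflexivity.
    rewrite csum_plus, csum_scal, F, HB, H2. ring. Qed.

Fixpoint ssum (r : Z -> C) (m : nat) (n : Z) : C :=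
  match m with O => 0 | S m' => ssum r m' (n + 1)%Z + r n end.

Lemma sums_bar q r : forall m n,
  csum (fst (it (Sbar q r) bbar m n)) (2 * m + 1) = 1 /\ csum (snd (it (Sbar q r) bbar m n)) (2 * m + 1) = ssum r m n.
Proof. induction m; intros n.
  - simpl. unfold zseq, delta0; split; ring.
  - destruct (IHm (n + 1)%Z) as [H1 H2]. set (v := it (Sbar q r) bbar m (n + 1)) in *.
    assert (Hs : supp v (2 * m + 1)) by (apply it_supp; [intros; apply Sbar_supp; auto| apply bbar_supp]).
    replace (2 * S m + 1)%nat with (S (S (2 * m + 1))) by lia. simpl it. fold v.
    assert (HA : csum (fst v) (S (S (2 * m + 1))) = csum (fst v) (2 * m + 1)).
    { apply csum_extend. lia. intros k Hk. apply (proj1 (Hs k Hk)). }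
    assert (HB : csum (snd v) (S (S (2 * m + 1))) = csum (snd v) (2 * m + 1)).
    { apply csum_extend. lia. intros k Hk. apply (proj2 (Hs k Hk)). }
    assert (F : csum (fst (Sbar q r n v)) (S (S (2 * m + 1))) = 1).
    { transitivity (csum (fun k => fst v k + q n * (snd v k - shift2 (snd v) k)) (S (S (2 * m + 1)))). reflexivity.
      rewrite csum_plus, csum_scal, csum_minus, !csum_shift2', HA, HB, H1. ring. }
    split; auto.
    transitivity (csum (fun k => shift2 (snd v) k + r n * fst (Sbar q r n v) k) (S (S (2 * m + 1)))). reflexivity.
    rewrite csum_plus, csum_scal, F, csum_shift2', H2. simpl. ring. Qed.


Open Scope C_scope.

Definition cP q r n k := coefL (Spsi q r) bpsi n k.
Definition cB q r n k := coefL (Sbar q r) bbar n k.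

Lemma vec_eta (v : vec2) : (fst v, snd v) = v.
Proof. destruct v; auto. Qed.

Lemma Kc_eq q r psi psib (hq : rapid_decay q) (hr : rapid_decay r)
  (hpsi : jost_psi q r psi) (hpsib : jost_psibar q r psib) n k :
  Kc psi n (n + Z.of_nat k) = cP q r n k.
Proof. unfold Kc.
  destruct (K_ident_gen 1 (Spsi q r) bpsi (Gqr q r) psi n (- (n + Z.of_nat k) - 1) k (good_psi q r hq hr)
    (fun t => proj1 (identify q r psi psib hq hr hpsi hpsib n t))) as [A B].
  { intros k'. split; intros H. apply Nat2Z.inj. lia. subst; lia. }
  rewrite A, B. apply vec_eta. Qed.

Lemma Kbc_eq q r psi psib (hq : rapid_decay q) (hr : rapid_decay r)
  (hpsi : jost_psi q r psi) (hpsib : jost_psibar q r psib) n k :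
  Kbc psib n (n + Z.of_nat k) = cB q r n k.
Proof. unfold Kbc.
  destruct (K_ident_gen (-1) (Sbar q r) bbar (Gqr q r) psib n (n + Z.of_nat k - 1) k (good_bar q r hq hr)
    (fun t => proj2 (identify q r psi psib hq hr hpsi hpsib n t))) as [A B].
  { intros k'. split; intros H. apply Nat2Z.inj. lia. subst; lia. }
  rewrite A, B. apply vec_eta. Qed.

Lemma cP0 q r n : rapid_decay q -> rapid_decay r ->
  fst (cP q r n 0) = - q n * snd (cP q r (n + 1) 0) /\ snd (cP q r n 0) = (1 - q n * r n) * snd (cP q r (n + 1) 0).
Proof. intros hq hr. assert (Hg := good_psi q r hq hr).
  destruct (coef_lim _ _ _ Hg n 0) as [A1 A2]. destruct (coef_lim _ _ _ Hg (n + 1) 0) as [B1 B2].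
  apply clim_shift in A1. apply clim_shift in A2. unfold cP. split.
  - apply (clim_unique _ _ _ A1). eapply clim_ext; [|apply (clim_scal (- q n) _ _ B2)].
    exists O. intros m _. simpl. ring.
  - apply (clim_unique _ _ _ A2). eapply clim_ext; [|apply (clim_scal (1 - q n * r n) _ _ B2)].
    exists O. intros m _. simpl. ring. Qed.

Lemma cB0 q r n : rapid_decay q -> rapid_decay r ->
  fst (cB q r n 0) = fst (cB q r (n + 1) 0) + q n * snd (cB q r (n + 1) 0) /\ snd (cB q r n 0) = r n * fst (cB q r n 0).
Proof. intros hq hr. assert (Hg := good_bar q r hq hr).
  destruct (coef_lim _ _ _ Hg n 0) as [A1 A2]. destruct (coef_lim _ _ _ Hg (n + 1) 0) as [B1 B2].
  apply clim_shift in A1. apply clim_shift in A2. unfold cB. split.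
  - apply (clim_unique _ _ _ A1). eapply clim_ext; [|apply (clim_plus _ _ _ _ B1 (clim_scal (q n) _ _ B2))].
    exists O. intros m _. simpl. ring.
  - apply (clim_unique _ _ _ A2). eapply clim_ext; [|apply (clim_scal (r n) _ _ A1)].
    exists O. intros m _. simpl. ring. Qed.

Lemma nonzero_down (f g : Z -> C) : (forall n, f n = g n * f (n + 1)%Z) -> (forall n, g n <> 0) ->
  (exists N, forall n, (N <= n)%Z -> f n <> 0) -> forall n, f n <> 0.
Proof. intros Hf Hg [N HN] n. assert (H : forall j : nat, f (N - Z.of_nat j)%Z <> 0).
  { induction j. replace (N - Z.of_nat 0)%Z with N by lia. apply HN; lia.
    rewrite Hf. replace (N - Z.of_nat (S j) + 1)%Z with (N - Z.of_nat j)%Z by lia.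
    intro H. apply IHj. replace (f (N - Z.of_nat j)%Z) with (/ g (N - Z.of_nat (S j))%Z * (g (N - Z.of_nat (S j))%Z * f (N - Z.of_nat j)%Z)) by (field; apply Hg).
    rewrite H. ring. }
  destruct (Z_le_gt_dec N n). apply HN; auto.
  replace n with (N - Z.of_nat (Z.to_nat (N - n)))%Z by lia. apply H. Qed.

Lemma near1_nonzero (x : C) (e : R) : (Cmod (x - 1) <= e)%R -> (e < 1)%R -> x <> 0.
Proof. intros H1 H2 Hx. subst. replace (0 - 1) with (-(1)) in H1 by ring. rewrite Cmod_opp, Cmod_1 in H1. lra. Qed.

Lemma cP0_nz q r : rapid_decay q -> rapid_decay r -> (forall n, 1 - q n * r n <> 0) -> forall n, snd (cP q r n 0) <> 0.
Proof. intros hq hr h1. apply (nonzero_down _ (fun n => 1 - q n * r n)).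
  intros n; apply (cP0 q r n hq hr). auto.
  assert (Hg := good_psi q r hq hr). destruct (good_asym _ _ _ Hg) as [N1 [_ HA]].
  destruct (eta_lim 1 Rlt_0_1) as [N2 HN2]. exists (Z.max N1 N2). intros n Hn.
  destruct (coef_lim _ _ _ Hg n 0) as [_ A2].
  apply (near1_nonzero _ (exp 5 * T5 n)); [|apply HN2; lia].
  apply (clim_bound _ _ _ _ O A2). intros m _.
  eapply Rle_trans. 2: apply (HA n m 1%nat ltac:(lia)). eapply Rle_trans. 2: apply nuV_snd.
  apply (nu_coef 1 (snd (it (Spsi q r) bpsi m n)) delta0 0). lia. Qed.

Lemma cB0_nz q r : rapid_decay q -> rapid_decay r -> (forall n, 1 + q n * r (n + 1)%Z <> 0) -> forall n, fst (cB q r n 0) <> 0.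
Proof. intros hq hr h2. apply (nonzero_down _ (fun n => 1 + q n * r (n + 1)%Z)).
  intros n. destruct (cB0 q r n hq hr) as [A _]. destruct (cB0 q r (n + 1) hq hr) as [_ B].
  rewrite A, B. ring. auto.
  assert (Hg := good_bar q r hq hr). destruct (good_asym _ _ _ Hg) as [N1 [_ HA]].
  destruct (eta_lim 1 Rlt_0_1) as [N2 HN2]. exists (Z.max N1 N2). intros n Hn.
  destruct (coef_lim _ _ _ Hg n 0) as [A1 _].
  apply (near1_nonzero _ (exp 5 * T5 n)); [|apply HN2; lia].
  apply (clim_bound _ _ _ _ O A1). intros m _.
  eapply Rle_trans. 2: apply (HA n m 1%nat ltac:(lia)). eapply Rle_trans. 2: apply nuV_fst.
  apply (nu_coef 1 (fst (it (Sbar q r) bbar m n)) delta0 0). lia. Qed.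

Lemma ser_P q r n : rapid_decay q -> rapid_decay r ->
  clim_to (fun K => csum (fun k => fst (cP q r n k)) K) 0 /\ clim_to (fun K => csum (fun k => snd (cP q r n k)) K) 1.
Proof. intros hq hr. assert (Hg := good_psi q r hq hr). split.
  - destruct (coef_series _ _ _ Hg n fst (fun J v v' => nuV_fst J (vsub v v'))
      (fun v L Hs k Hk => proj1 (Hs k Hk)) (fun k => fst (cP q r n k)) (fun k => proj1 (coef_lim _ _ _ Hg n k)))
      as [Ls [H1 H2]].
    replace (RtoC 0) with Ls; auto. apply (clim_unique _ _ _ H1). eapply clim_ext; [|apply clim_const].
    exists O. intros m _. symmetry. apply (sums_psi q r m n).
  - destruct (coef_series _ _ _ Hg n snd (fun J v v' => nuV_snd J (vsub v v'))
      (fun v L Hs k Hk => proj2 (Hs k Hk)) (fun k => snd (cP q r n k)) (fun k => proj2 (coef_lim _ _ _ Hg n k)))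
      as [Ls [H1 H2]].
    replace (RtoC 1) with Ls; auto. apply (clim_unique _ _ _ H1). eapply clim_ext; [|apply clim_const].
    exists O. intros m _. symmetry. apply (sums_psi q r m n). Qed.

Lemma ser_B q r n : rapid_decay q -> rapid_decay r ->
  clim_to (fun K => csum (fun k => fst (cB q r n k)) K) 1 /\
  exists D, clim_to (fun m => ssum r m n) D /\ clim_to (fun K => csum (fun k => snd (cB q r n k)) K) D.
Proof. intros hq hr. assert (Hg := good_bar q r hq hr). split.
  - destruct (coef_series _ _ _ Hg n fst (fun J v v' => nuV_fst J (vsub v v'))
      (fun v L Hs k Hk => proj1 (Hs k Hk)) (fun k => fst (cB q r n k)) (fun k => proj1 (coef_lim _ _ _ Hg n k)))
      as [Ls [H1 H2]].
    replace (RtoC 1) with Ls; auto. apply (clim_unique _ _ _ H1). eapply clim_ext; [|apply clim_const].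
    exists O. intros m _. symmetry. apply (sums_bar q r m n).
  - destruct (coef_series _ _ _ Hg n snd (fun J v v' => nuV_snd J (vsub v v'))
      (fun v L Hs k Hk => proj2 (Hs k Hk)) (fun k => snd (cB q r n k)) (fun k => proj2 (coef_lim _ _ _ Hg n k)))
      as [Ls [H1 H2]].
    exists Ls. split; auto. eapply clim_ext; [|apply H1]. exists O. intros m _. apply (sums_bar q r m n). Qed.

Lemma ser_lin (f g : nat -> C) F G al be W :
  clim_to (fun K => csum f K) F -> clim_to (fun K => csum g K) G -> al * F + be * G = W ->
  is_series (K := R_AbsRing) (V := C_R_NormedModule) (fun k => al * f k + be * g k) W.
Proof. intros H1 H2 HW. subst. apply is_series_of. eapply clim_ext; [|apply clim_plus; apply clim_scal; eauto].
  exists O. intros; rewrite csum_plus, !csum_scal; auto. Qed.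

Lemma four_series q r psi psib (hq : rapid_decay q) (hr : rapid_decay r)
  (h1 : forall n : Z, 1 - q n * r n <> 0) (h2 : forall n : Z, 1 + q n * r (n + 1)%Z <> 0)
  (hpsi : jost_psi q r psi) (hpsib : jost_psibar q r psib) n :
  let a := fst (cB q r n 0) in let B1 := snd (cP q r (n + 1) 0) in
  a <> 0 /\ B1 <> 0 /\ exists D, clim_to (fun m => ssum r m n) D /\
  zsum_from n (fun l => comp1 (Mc psi psib n l)) (q n / a) /\
  zsum_from n (fun l => comp2 (Mc psi psib n l)) (/ B1) /\
  zsum_from n (fun l => comp1 (Mbar psi psib n l)) ((1 - q n * r n + q n * D) / a) /\
  zsum_from n (fun l => comp2 (Mbar psi psib n l)) ((D - r n) / B1).
Proof. intros a B1.
  assert (Ha : a <> 0) by apply (cB0_nz q r hq hr h2). assert (HB : B1 <> 0) by apply (cP0_nz q r hq hr h1).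
  split; auto. split; auto.
  destruct (ser_P q r n hq hr) as [P1 P2]. destruct (ser_B q r n hq hr) as [B1s [D [HD B2s]]].
  exists D. split; auto.
  assert (KP : forall k, Kc psi n (n + Z.of_nat k) = cP q r n k) by (intros; apply (Kc_eq q r psi psib); auto).
  assert (KB : forall k, Kbc psib n (n + Z.of_nat k) = cB q r n k) by (intros; apply (Kbc_eq q r psi psib); auto).
  assert (KP0 : Kc psi n n = cP q r n 0) by (rewrite <- (KP O); f_equal; lia).
  assert (KB0 : Kbc psib n n = cB q r n 0) by (rewrite <- (KB O); f_equal; lia).
  destruct (cP0 q r n hq hr) as [Eb Ed]. destruct (cB0 q r n hq hr) as [_ Ec].
  fold B1 in Eb, Ed. fold a in Ec.
  set (b := fst (cP q r n 0)) in *. set (d := snd (cP q r n 0)) in *. set (c := snd (cB q r n 0)) in *.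
  assert (Hdet : a * d - b * c = a * B1) by (rewrite Eb, Ed, Ec; ring).
  assert (Hdn : a * d - b * c <> 0). { rewrite Hdet. intro H. apply Ha. replace a with (a * B1 / B1) by (field; auto). rewrite H. field; auto. }
  assert (Hinv : forall v, inv2_apply (Kbc psib n n) (Kc psi n n) v =
     (/ (a * d - b * c) * (d * comp1 v - b * comp2 v), / (a * d - b * c) * (- c * comp1 v + a * comp2 v))).
  { intros v. rewrite KP0, KB0. reflexivity. }
  unfold zsum_from, Mc, Mbar. repeat split.
  - eapply is_series_ext. 2: apply (ser_lin _ _ _ _ (/ (a * d - b * c) * d) (- (/ (a * d - b * c) * b)) _ P1 P2).
    intros k. rewrite Hinv, KP. unfold comp1, comp2; simpl. ring.
    rewrite Hdet, Eb. field. auto.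
  - eapply is_series_ext. 2: apply (ser_lin _ _ _ _ (- (/ (a * d - b * c) * c)) (/ (a * d - b * c) * a) _ P1 P2).
    intros k. rewrite Hinv, KP. unfold comp1, comp2; simpl. ring.
    rewrite Hdet. field. auto.
  - eapply is_series_ext. 2: apply (ser_lin _ _ _ _ (/ (a * d - b * c) * d) (- (/ (a * d - b * c) * b)) _ B1s B2s).
    intros k. rewrite Hinv, KB. unfold comp1, comp2; simpl. ring.
    rewrite Hdet, Eb, Ed. field. auto.
  - eapply is_series_ext. 2: apply (ser_lin _ _ _ _ (- (/ (a * d - b * c) * c)) (/ (a * d - b * c) * a) _ B1s B2s).
    intros k. rewrite Hinv, KB. unfold comp1, comp2; simpl. ring.
    rewrite Hdet, Ec. field. auto. Qed.


Open Scope C_scope.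

Theorem theorem6p3 (q r : Z -> C) (psi psib : Z -> C -> vec2)
  (hq : rapid_decay q) (hr : rapid_decay r)
  (h1 : forall n : Z, 1 - q n * r n <> 0)
  (h2 : forall n : Z, 1 + q n * r (n + 1)%Z <> 0)
  (hpsi : jost_psi q r psi) (hpsib : jost_psibar q r psib) :
  forall n : Z,
    (exists S1 S2 S3 S4 : C,
        zsum_from n (fun l => comp1 (Mc psi psib n l)) S1 /\
        zsum_from n (fun k => comp2 (Mc psi psib n k)) S2 /\
        zsum_from n (fun l => comp1 (Mbar psi psib n l)) S3 /\
        zsum_from n (fun k => comp2 (Mbar psi psib n k)) S4 /\
        q n = S1 * S2 / (S3 * S2 - S1 * S4)) /\
    (exists T1 T2 U1 U2 : C,
        zsum_from (n - 1)%Z (fun l => comp2 (Mbar psi psib (n - 1)%Z l)) T1 /\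
        zsum_from (n - 1)%Z (fun l => comp2 (Mc psi psib (n - 1)%Z l)) T2 /\
        zsum_from n (fun l => comp2 (Mbar psi psib n l)) U1 /\
        zsum_from n (fun l => comp2 (Mc psi psib n l)) U2 /\
        r n = T1 / T2 - U1 / U2).
Proof.
  intros n.
  destruct (four_series q r psi psib hq hr h1 h2 hpsi hpsib n) as [Ha [HB [D [HD [S1 [S2 [S3 S4]]]]]]].
  destruct (four_series q r psi psib hq hr h1 h2 hpsi hpsib (n - 1)) as [Ha' [HB' [D' [HD' [_ [T2 [_ T1]]]]]]].
  split.
  - eexists _, _, _, _. split. exact S1. split. exact S2. split. exact S3. split. exact S4.
    set (a := fst (cB q r n 0)) in *. set (B1 := snd (cP q r (n + 1) 0)) in *.
    assert (Hden : ((1 - q n * r n + q n * D) / a) * / B1 - q n / a * ((D - r n) / B1) = / (a * B1)) by (field; auto).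
    rewrite Hden. field; auto.
  - set (a := fst (cB q r n 0)) in *. set (B1 := snd (cP q r (n + 1) 0)) in *.
    set (a' := fst (cB q r (n - 1) 0)) in *. set (B1' := snd (cP q r (n - 1 + 1) 0)) in *.
    eexists _, _, _, _. split. exact T1. split. exact T2. split. exact S4. split. exact S2.
    assert (HDD : D' = D + r (n - 1)%Z).
    { apply (clim_unique (fun m => ssum r (S m) (n - 1))). apply (clim_shift (fun m => ssum r m (n - 1))); auto.
      simpl. replace (n - 1 + 1)%Z with n by lia. apply clim_plus; auto. apply clim_const. }
    rewrite HDD. field; auto.
Qed.
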